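(* Let $a<0$, $\kappa>0$, $\alpha,\beta\ge0$, and let $U=[a,0-]\cup\{0+\}$. Let $A$ be the operator in $C(U)$ whose domain consists of those $f\in C(U)$ which, restricted to $[a,0-]$, are twice continuously differentiable and satisfy \[f'(a)=0,\qquad f'(0-)=\beta\,(f(0+)-f(0-)),\] given by $Af(0+)=-\alpha f(0+)+\alpha f(0-)$ and $Af(x)=\kappa f''(x)$ for $x\in[a,0-]$. Then $A$ is the generator of a conservative Feller semigroup in $C(U)$.
   Context: $U$ is the disjoint union of the interval $[a,0-]$ and an isolated point $0+$ ($0-$, $0+$ are distinct copies of $0$); $C(U)$ is the space of continuous functions on $U$ with the supremum norm. A conservative Feller semigroup is a strongly continuous semigroup of positive operators on $C(U)$ fixing the constant function $1_U$. *)

(* Defs.v *)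
From Stdlib Require Import Reals.
Open Scope R_scope.

Definition Iv (a : R) : Type := {x : R | a <= x <= 0}.

(** U = [a,0-] disjoint union {0+}: [inl x] for x in [a,0-], [inr tt] is 0+. *)
Definition U (a : R) : Type := (Iv a + unit)%type.

Definition zplus (a : R) : U a := inr tt.

Definition cont_Iv (a : R) (h : Iv a -> R) : Prop :=
  forall x : Iv a, forall eps, 0 < eps -> exists d, 0 < d /\
    forall y : Iv a, Rabs (proj1_sig y - proj1_sig x) < d ->
      Rabs (h y - h x) < eps.

(** f belongs to C(U): continuous on [a,0-] (0+ is isolated). *)
Definition CU (a : R) (f : U a -> R) : Prop :=
  cont_Iv a (fun x => f (inl x)).

Definition deriv_Iv (a : R) (h : Iv a -> R) (x : Iv a) (l : R) : Prop :=
  forall eps, 0 < eps -> exists d, 0 < d /\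
    forall y : Iv a, proj1_sig y <> proj1_sig x ->
      Rabs (proj1_sig y - proj1_sig x) < d ->
      Rabs ((h y - h x) / (proj1_sig y - proj1_sig x) - l) < eps.

Definition graphA (a kappa alpha beta : R) (f g : U a -> R) : Prop :=
  CU a f /\
  exists h1 h2 : Iv a -> R,
    (forall x, deriv_Iv a (fun y => f (inl y)) x (h1 x)) /\
    (forall x, deriv_Iv a h1 x (h2 x)) /\
    cont_Iv a h2 /\
    (forall x : Iv a, proj1_sig x = a -> h1 x = 0) /\
    (forall x : Iv a, proj1_sig x = 0 ->
        h1 x = beta * (f (zplus a) - f (inl x))) /\
    (forall x : Iv a, proj1_sig x = 0 ->
        g (zplus a) = - alpha * f (zplus a) + alpha * f (inl x)) /\
    (forall x : Iv a, g (inl x) = kappa * h2 x).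

(** Conservative Feller semigroup on C(U); T t acts on functions U -> R,
    only its action on C(U) matters. Sup-norm statements are written
    out pointwise: ||f|| <= B  iff  forall u, |f u| <= B. *)
Definition conservative_Feller_semigroup (a : R)
    (T : R -> (U a -> R) -> (U a -> R)) : Prop :=
  (forall t f, 0 <= t -> CU a f -> CU a (T t f)) /\
  (forall t f g c d, 0 <= t -> CU a f -> CU a g ->
     forall u, T t (fun v => c * f v + d * g v) u = c * T t f u + d * T t g u) /\
  (forall t, 0 <= t -> exists M, forall f B, CU a f ->
     (forall u, Rabs (f u) <= B) -> forall u, Rabs (T t f u) <= M * B) /\
  (forall f, CU a f -> forall u, T 0 f u = f u) /\
  (forall t s f, 0 <= t -> 0 <= s -> CU a f ->
     forall u, T (t + s) f u = T t (T s f) u) /\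
  (forall f, CU a f -> forall eps, 0 < eps -> exists d, 0 < d /\
     forall t, 0 <= t < d -> forall u, Rabs (T t f u - f u) <= eps) /\
  (forall t f, 0 <= t -> CU a f -> (forall u, 0 <= f u) ->
     forall u, 0 <= T t f u) /\
  (forall t, 0 <= t -> forall u, T t (fun _ => 1) u = 1).

Definition gen_graph (a : R) (T : R -> (U a -> R) -> (U a -> R))
    (f g : U a -> R) : Prop :=
  forall eps, 0 < eps -> exists d, 0 < d /\
    forall h, 0 < h < d -> forall u, Rabs ((T h f u - f u) / h - g u) <= eps.

(* Main.v *)
Require Import Defs.
From Stdlib Require Import Reals Lra Lia ZArith FunctionalExtensionality ProofIrrelevance.
From Coquelicot Require Import Coquelicot.
Require Import Defs.
Open Scope R_scope.

Definition nb {T : Type} (f : T -> R) (B : R) : Prop := forall u, Rabs (f u) <= B.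

Lemma lim_char (u : nat -> R) (l : R) :
  (forall eps, 0 < eps -> exists N, forall n, (N <= n)%nat -> Rabs (u n - l) <= eps) ->
  real (Lim_seq u) = l.
Proof.
  intros H. assert (Hl : is_lim_seq u l).
  { apply is_lim_seq_spec. intros eps. destruct (H (eps/2)) as [N HN].
    destruct eps; simpl; lra.
    exists N. intros n Hn. specialize (HN n Hn). destruct eps; simpl in *; lra. }
  rewrite (is_lim_seq_unique _ _ Hl). reflexivity.
Qed.

Lemma cauchy_lim_old (u : nat -> R) :
  (forall eps, 0 < eps -> exists N, forall n m, (N <= n)%nat -> (N <= m)%nat -> Rabs (u n - u m) <= eps) ->
  forall eps, 0 < eps -> exists N, forall n, (N <= n)%nat -> Rabs (u n - real (Lim_seq u)) <= eps.
Proof.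
  intros H.
  assert (Hc : ex_lim_seq_cauchy u).
  { intros eps. destruct (H (eps/2)) as [N HN]. destruct eps; simpl; lra.
    exists N. intros n m Hn Hm. specialize (HN n m Hn Hm). destruct eps; simpl in *; lra. }
  destruct (proj2 (ex_lim_seq_cauchy_corr u) Hc) as [l Hl].
  rewrite (is_lim_seq_unique _ _ Hl). simpl.
  intros eps Heps. destruct (H eps Heps) as [N HN]. exists N. intros n Hn.
  assert (Hl2 : is_lim_seq (fun m => Rabs (u n - u m)) (Rabs (u n - l))).
  { apply (is_lim_seq_abs (fun m => u n - u m) (u n - l)).
    apply is_lim_seq_minus'. apply is_lim_seq_const. exact Hl. }
  assert (Hle := is_lim_seq_le_loc (fun m => Rabs (u n - u m)) (fun _ => eps) (Rabs (u n - l)) eps).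
  simpl in Hle. apply Hle; [| exact Hl2 | apply is_lim_seq_const].
  exists N. intros m Hm. apply HN; auto.
Qed.

Ltac unabs := repeat match goal with
 | H : Rabs _ <= _ |- _ => apply Rabs_le_between in H; destruct H
 | H : Rabs _ < _ |- _ => apply Rabs_lt_between in H; destruct H
 end.
Ltac rlra := unabs; try (apply Rabs_le_between; split); lra.

Lemma Rabs_pos_le x B : Rabs x <= B -> 0 <= B.
Proof. intros H; generalize (Rabs_pos x); lra. Qed.

Section CUlemmas.
Variable a : R.

Lemma CU_ext f g : (forall u, f u = g u) -> CU a f -> CU a g.
Proof. intros H Hf. replace g with f; auto. apply functional_extensionality; auto. Qed.

Lemma CU_const c : CU a (fun _ => c).
Proof.
  unfold CU, cont_Iv. intros x eps He. exists 1. split. lra.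
  intros y _. rewrite Rminus_eq_0, Rabs_R0. lra.
Qed.

Lemma CU_lin f g c d : CU a f -> CU a g -> CU a (fun u => c * f u + d * g u).
Proof.
  unfold CU, cont_Iv. intros Hf Hg x eps He.
  remember (Rabs c + Rabs d + 1) as K eqn:HKdef.
  assert (HK : 0 < K) by (rewrite HKdef; generalize (Rabs_pos c) (Rabs_pos d); lra).
  destruct (Hf x (eps / K)) as [d1 [Hd1 H1]]. apply Rdiv_lt_0_compat; lra.
  destruct (Hg x (eps / K)) as [d2 [Hd2 H2]]. apply Rdiv_lt_0_compat; lra.
  exists (Rmin d1 d2). split. apply Rmin_pos; lra.
  intros y Hy.
  assert (A1 := H1 y (Rlt_le_trans _ _ _ Hy (Rmin_l _ _))).
  assert (A2 := H2 y (Rlt_le_trans _ _ _ Hy (Rmin_r _ _))).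
  replace (c * f (inl y) + d * g (inl y) - (c * f (inl x) + d * g (inl x))) with
    (c * (f (inl y) - f (inl x)) + d * (g (inl y) - g (inl x))) by ring.
  eapply Rle_lt_trans. apply Rabs_triang. rewrite !Rabs_mult.
  assert (B1 : Rabs c * Rabs (f (inl y) - f (inl x)) <= Rabs c * (eps / K)).
  { apply Rmult_le_compat_l. apply Rabs_pos. lra. }
  assert (B2 : Rabs d * Rabs (g (inl y) - g (inl x)) <= Rabs d * (eps / K)).
  { apply Rmult_le_compat_l. apply Rabs_pos. lra. }
  assert (E : eps = K * (eps / K)) by (field; lra).
  assert (0 < eps / K) by (apply Rdiv_lt_0_compat; lra).
  assert (K * (eps / K) = Rabs c * (eps / K) + Rabs d * (eps / K) + eps / K) by (rewrite HKdef; ring).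
  lra.
Qed.

Lemma CU_ulim f : (forall eps, 0 < eps -> exists h, CU a h /\ nb (fun u => f u - h u) eps) -> CU a f.
Proof.
  unfold CU, cont_Iv. intros H x eps He.
  destruct (H (eps/3)) as [h [Hh Hfh]]. lra.
  destruct (Hh x (eps/3)) as [d [Hd Hd']]. lra.
  exists d. split; auto. intros y Hy. specialize (Hd' y Hy).
  generalize (Hfh (inl y)) (Hfh (inl x)). intros A1 A2.
  apply Rabs_lt_between. unabs. split; lra.
Qed.

Lemma nb_nonneg (f : U a -> R) B : nb f B -> 0 <= B.
Proof. intros H. apply (Rabs_pos_le (f (inr tt))). apply H. Qed.

End CUlemmas.

Definition fl (x : R) : nat := Z.to_nat (Int_part x).

Lemma fl_spec x : 0 <= x -> INR (fl x) <= x < INR (fl x) + 1.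
Proof.
  intros Hx. destruct (base_Int_part x) as [H1 H2].
  assert (Hz : (0 <= Int_part x)%Z).
  { assert (Hm : (-1 < Int_part x)%Z). { apply lt_IZR. simpl. lra. } lia. }
  unfold fl. rewrite INR_IZR_INZ, Z2Nat.id by auto. lra.
Qed.

Lemma fl_ge k x : 0 <= x -> INR k <= x -> (k <= fl x)%nat.
Proof.
  intros Hx Hk. destruct (le_lt_dec k (fl x)) as [H|H]; auto.
  exfalso. apply lt_INR in H. destruct (fl_spec x Hx).
  assert (INR (S (fl x)) <= INR k) by (apply le_INR; apply INR_lt in H; lia).
  rewrite S_INR in H2. lra.
Qed.

Lemma fl_lt k x : 0 <= x -> x < INR k -> (fl x < k)%nat.
Proof.
  intros Hx Hk. destruct (fl_spec x Hx). apply INR_lt. lra.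
Qed.

Lemma fl_0 : fl 0 = 0%nat.
Proof. assert (H : (fl 0 < 1)%nat) by (apply fl_lt; simpl; lra). lia. Qed.

Lemma cauchy_islim (s : nat -> R) :
  (forall eps, 0 < eps -> exists N, forall n m, (N <= n)%nat -> (N <= m)%nat -> Rabs (s n - s m) <= eps) ->
  is_lim_seq s (real (Lim_seq s)).
Proof.
  intros H.
  assert (Hc : ex_lim_seq_cauchy s).
  { intros eps. destruct (H (eps/2)) as [N HN]. destruct eps; simpl; lra.
    exists N. intros n m Hn Hm. specialize (HN n m Hn Hm). destruct eps; simpl in *; lra. }
  destruct (proj2 (ex_lim_seq_cauchy_corr s) Hc) as [l Hl].
  rewrite (is_lim_seq_unique _ _ Hl). simpl. exact Hl.
Qed.

Lemma lim_bound (s : nat -> R) (l : R) N eps : is_lim_seq s l ->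
  (forall n m, (N <= n)%nat -> (N <= m)%nat -> Rabs (s n - s m) <= eps) ->
  forall n, (N <= n)%nat -> Rabs (s n - l) <= eps.
Proof.
  intros Hl HN n Hn.
  assert (Hl2 : is_lim_seq (fun m => Rabs (s n - s m)) (Rabs (s n - l))).
  { apply (is_lim_seq_abs (fun m => s n - s m) (s n - l)).
    apply is_lim_seq_minus'. apply is_lim_seq_const. exact Hl. }
  assert (Hle := is_lim_seq_le_loc (fun m => Rabs (s n - s m)) (fun _ => eps) (Rabs (s n - l)) eps).
  simpl in Hle. apply Hle; [| exact Hl2 | apply is_lim_seq_const].
  exists N. intros m Hm. apply HN; auto.
Qed.

Lemma big_N C eps : 0 <= C -> 0 < eps -> exists N1, (0 < N1)%nat /\ forall N, (N1 <= N)%nat -> C / INR N <= eps.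
Proof.
  intros HC He. exists (S (fl (C / eps))). split. lia. intros N HN.
  assert (H0 : 0 <= C / eps) by (apply Rmult_le_pos; auto; left; apply Rinv_0_lt_compat; auto).
  destruct (fl_spec _ H0) as [_ H2].
  apply le_INR in HN. rewrite S_INR in HN.
  assert (HNp : 0 < INR N) by lra.
  apply (Rmult_le_reg_r (INR N)); auto. unfold Rdiv. rewrite Rmult_assoc, Rinv_l by lra.
  assert (C / eps * eps = C) by (field; lra).
  assert (C <= eps * INR N). { rewrite <- H. rewrite Rmult_comm. apply Rmult_le_compat_l; lra. }
  lra.
Qed.

Section Abs.
Variable a : R.
Notation X := (U a -> R).
Variable J : R -> X -> X.
Variable G : X -> X -> Prop.
Hypothesis CU_bounded : forall f, CU a f -> exists B, nb f B.
Hypothesis HJ_CU : forall l f, 0 < l -> CU a f -> CU a (J l f).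
Hypothesis HJ_lin : forall l f g c d, 0 < l -> CU a f -> CU a g ->
  J l (fun u => c * f u + d * g u) = (fun u => c * J l f u + d * J l g u).
Hypothesis HJ_pos : forall l f, 0 < l -> CU a f -> (forall u, 0 <= f u) -> forall u, 0 <= J l f u.
Hypothesis HJ_one : forall l, 0 < l -> J l (fun _ => 1) = (fun _ => 1).
Hypothesis HG_CU : forall f g, G f g -> CU a f /\ CU a g.
Hypothesis HG_lin : forall f1 g1 f2 g2 c d, G f1 g1 -> G f2 g2 ->
  G (fun u => c * f1 u + d * f2 u) (fun u => c * g1 u + d * g2 u).
Hypothesis HJ_G : forall l f, 0 < l -> CU a f -> G (J l f) (fun u => l * (J l f u - f u)).
Hypothesis HG_J : forall l f g, 0 < l -> G f g -> J l f = (fun u => f u + / l * J l g u).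
Hypothesis HJ_conv : forall f, CU a f -> forall eps, 0 < eps ->
  exists N0, (0 < N0)%nat /\ forall N, (N0 <= N)%nat -> nb (fun u => J (INR N) f u - f u) eps.

Definition good (Y : X -> X) : Prop :=
  (forall f, CU a f -> CU a (Y f)) /\
  (forall f g c d, CU a f -> CU a g -> Y (fun u => c * f u + d * g u) = (fun u => c * Y f u + d * Y g u)) /\
  (forall f B, CU a f -> nb f B -> nb (Y f) B).

Definition commute (Y Z : X -> X) := forall f, CU a f -> Y (Z f) = Z (Y f).

Lemma CU_sub f g : CU a f -> CU a g -> CU a (fun u => f u - g u).
Proof. intros. apply (CU_ext a (fun u => 1 * f u + (-1) * g u)). intros; ring. apply CU_lin; auto. Qed.

Lemma CU_addsc f g c : CU a f -> CU a g -> CU a (fun u => f u + c * g u).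
Proof. intros. apply (CU_ext a (fun u => 1 * f u + c * g u)). intros; ring. apply CU_lin; auto. Qed.

Lemma CU_scal f c : CU a f -> CU a (fun u => c * f u).
Proof. intros. apply (CU_ext a (fun u => c * f u + 0 * f u)). intros; ring. apply CU_lin; auto. Qed.

Lemma good_sub Y f g : good Y -> CU a f -> CU a g -> Y (fun u => f u - g u) = (fun u => Y f u - Y g u).
Proof.
  intros [_ [HL _]] Hf Hg.
  replace (fun u => f u - g u) with (fun u => 1 * f u + (-1) * g u) by (apply functional_extensionality; intros; ring).
  rewrite HL by auto. apply functional_extensionality; intros; ring.
Qed.

Lemma good_sub_pt Y f g u : good Y -> CU a f -> CU a g -> Y (fun u => f u - g u) u = Y f u - Y g u.
Proof. intros. rewrite good_sub; auto. Qed.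

Lemma good_addsc Y f g c : good Y -> CU a f -> CU a g -> Y (fun u => f u + c * g u) = (fun u => Y f u + c * Y g u).
Proof.
  intros [_ [HL _]] Hf Hg.
  replace (fun u => f u + c * g u) with (fun u => 1 * f u + c * g u) by (apply functional_extensionality; intros; ring).
  rewrite HL by auto. apply functional_extensionality; intros; ring.
Qed.

Lemma good_scal Y f c : good Y -> CU a f -> Y (fun u => c * f u) = (fun u => c * Y f u).
Proof.
  intros [_ [HL _]] Hf.
  replace (fun u => c * f u) with (fun u => c * f u + 0 * f u) by (apply functional_extensionality; intros; ring).
  rewrite HL by auto. apply functional_extensionality; intros; ring.
Qed.

Lemma good_CU Y f : good Y -> CU a f -> CU a (Y f).
Proof. intros [H _]; auto. Qed.

Lemma good_nb Y f B : good Y -> CU a f -> nb f B -> nb (Y f) B.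
Proof. intros [_ [_ H]]; auto. Qed.

Lemma good_J l : 0 < l -> good (J l).
Proof.
  intros Hl. split; [|split].
  - intros; auto.
  - intros; auto.
  - intros f B Hf HB u.
    assert (H1 := HJ_pos l (fun v => B * 1 + (-1) * f v) Hl (CU_lin a _ _ _ _ (CU_const a 1) Hf)).
    assert (H2 := HJ_pos l (fun v => B * 1 + 1 * f v) Hl (CU_lin a _ _ _ _ (CU_const a 1) Hf)).
    rewrite HJ_lin, HJ_one in H1, H2 by (auto; apply CU_const).
    assert (A1 : 0 <= B * 1 + -1 * J l f u). { apply H1. intros v. specialize (HB v). rlra. }
    assert (A2 : 0 <= B * 1 + 1 * J l f u). { apply H2. intros v. specialize (HB v). rlra. }
    rlra.
Qed.

Lemma good_iter Y k : good Y -> good (fun f => Nat.iter k Y f).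
Proof.
  intros HY. induction k as [|k IH].
  - split; [|split]; simpl; auto.
  - destruct IH as [I1 [I2 I3]]. split; [|split]; simpl.
    + intros. apply good_CU; auto.
    + intros. rewrite I2 by auto. destruct HY as [_ [HL _]]. apply HL; auto.
    + intros. apply good_nb; auto.
Qed.

Lemma comm_iter Y Z k : good Y -> good Z -> commute Y Z -> commute (fun f => Nat.iter k Y f) Z.
Proof.
  intros HY HZ HC. induction k as [|k IH]; intros f Hf; simpl; auto.
  rewrite IH by auto. rewrite HC; auto. apply (good_CU (fun f => Nat.iter k Y f)); auto. apply good_iter; auto.
Qed.

Lemma iter_swap (Y : X -> X) k m f : Nat.iter k Y (Nat.iter m Y f) = Nat.iter m Y (Nat.iter k Y f).
Proof. rewrite <- !Nat.iter_add. f_equal. lia. Qed.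

Lemma iter_mul (Y : X -> X) m p f : Nat.iter (m * p) Y f = Nat.iter p (fun g => Nat.iter m Y g) f.
Proof.
  induction p as [|p IH]. simpl. rewrite Nat.mul_0_r. reflexivity.
  replace (m * S p)%nat with (m + m * p)%nat by lia. rewrite Nat.iter_add, IH. reflexivity.
Qed.

Lemma tele Y h B k : good Y -> CU a h -> nb (fun u => Y h u - h u) B ->
  nb (fun u => Nat.iter k Y h u - h u) (INR k * B).
Proof.
  intros HY Hh HB. assert (B0 : 0 <= B) by (apply (nb_nonneg a _ _ HB)).
  induction k as [|k IH]; intros u.
  - simpl. rewrite Rminus_eq_0, Rabs_R0. lra.
  - rewrite Nat.iter_succ_r.
    assert (Hg := good_iter Y k HY).
    assert (E : Nat.iter k Y (Y h) u - h u = (Nat.iter k Y (fun v => Y h v - h v) u) + (Nat.iter k Y h u - h u)).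
    { rewrite (good_sub (fun f => Nat.iter k Y f)); auto. simpl. ring. apply good_CU; auto. }
    rewrite E. specialize (IH u).
    assert (H2 := good_nb _ _ _ Hg (CU_sub _ _ (good_CU _ _ HY Hh) Hh) HB u). simpl in H2.
    rewrite S_INR. rlra.
Qed.

Lemma powdiff Y Z f B p : good Y -> good Z -> commute Y Z -> CU a f ->
  nb (fun u => Y f u - Z f u) B ->
  nb (fun u => Nat.iter p Y f u - Nat.iter p Z f u) (INR p * B).
Proof.
  intros HY HZ HC Hf HB. assert (B0 : 0 <= B) by (apply (nb_nonneg a _ _ HB)).
  assert (GY := fun k => good_iter Y k HY). assert (GZ := fun k => good_iter Z k HZ).
  induction p as [|p IH]; intros u.
  - simpl. rewrite Rminus_eq_0, Rabs_R0. lra.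
  - simpl Nat.iter.
    assert (CY : CU a (Nat.iter p Y f)) by (apply (good_CU (fun f => Nat.iter p Y f)); auto).
    assert (CZ : CU a (Nat.iter p Z f)) by (apply (good_CU (fun f => Nat.iter p Z f)); auto).
    assert (E1 : Y (Nat.iter p Z f) = Nat.iter p Z (Y f)).
    { symmetry. apply (comm_iter Z Y p HZ HY). intros g Hg. symmetry; apply HC; auto. auto. }
    assert (E2 : Z (Nat.iter p Z f) = Nat.iter p Z (Z f)).
    { rewrite <- Nat.iter_succ_r. reflexivity. }
    assert (E : Y (Nat.iter p Y f) u - Z (Nat.iter p Z f) u =
       Y (fun v => Nat.iter p Y f v - Nat.iter p Z f v) u + Nat.iter p Z (fun v => Y f v - Z f v) u).
    { rewrite good_sub by auto. rewrite (good_sub (fun f => Nat.iter p Z f)) by (auto; apply good_CU; auto).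
      rewrite <- E1, <- E2. ring. }
    rewrite E.
    assert (H1 := good_nb _ _ _ HY (CU_sub _ _ CY CZ) IH u).
    assert (H2 := good_nb _ _ _ (GZ p) (CU_sub _ _ (good_CU _ _ HY Hf) (good_CU _ _ HZ Hf)) HB u).
    simpl in H1, H2. rewrite S_INR. rlra.
Qed.

Lemma HJ_comm l m f : 0 < l -> 0 < m -> CU a f -> J l (J m f) = J m (J l f).
Proof.
  intros Hl Hm Hf. apply functional_extensionality. intros u.
  assert (E1 := HG_J l _ _ Hl (HJ_G m f Hm Hf)).
  assert (E2 := HG_J m _ _ Hm (HJ_G l f Hl Hf)).
  assert (L1 : J l (fun v => m * (J m f v - f v)) = fun v => m * J l (J m f) v + (-m) * J l f v).
  { rewrite <- HJ_lin by auto. f_equal. apply functional_extensionality; intros; ring. }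
  assert (L2 : J m (fun v => l * (J l f v - f v)) = fun v => l * J m (J l f) v + (-l) * J m f v).
  { rewrite <- HJ_lin by auto. f_equal. apply functional_extensionality; intros; ring. }
  rewrite L1 in E1. rewrite L2 in E2.
  apply (f_equal (fun h => h u)) in E1. apply (f_equal (fun h => h u)) in E2. simpl in E1, E2.
  set (A := J l (J m f) u) in *. set (B := J m (J l f) u) in *.
  set (P := J m f u) in *. set (Q := J l f u) in *.
  assert (F1 : (l - m) * A = l * P - m * Q).
  { rewrite E1 at 1. field_simplify. 2: lra. rewrite E1 at 1. field; lra. }
  assert (F2 : (m - l) * B = m * Q - l * P).
  { rewrite E2 at 1. field_simplify. 2: lra. rewrite E2 at 1. field; lra. }
  destruct (Req_dec l m) as [<-|Hne]. reflexivity.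
  apply (Rmult_eq_reg_l (l - m)). lra. lra.
Qed.

Definition Jp l k f := Nat.iter k (J l) f.
Definition sN (N : nat) t f := Jp (INR N) (fl (INR N * t)) f.

Lemma good_Jp l k : 0 < l -> good (fun f => Jp l k f).
Proof. intros; apply good_iter, good_J; auto. Qed.

Lemma J_minus_id l f g B : 0 < l -> G f g -> nb g B -> nb (fun u => J l f u - f u) (B / l).
Proof.
  intros Hl HG HB u. rewrite (HG_J l f g Hl HG).
  destruct (HG_CU _ _ HG) as [Cf Cg].
  assert (H := good_nb _ _ _ (good_J l Hl) Cg HB u).
  replace (f u + / l * J l g u - f u) with (/ l * J l g u) by ring.
  rewrite Rabs_mult, Rabs_inv, (Rabs_right l) by lra.
  unfold Rdiv. rewrite Rmult_comm. apply Rmult_le_compat_r. left; apply Rinv_0_lt_compat; lra. auto.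
Qed.

Lemma est_k mu k f g g2 C2 : 0 < mu -> G f g -> G g g2 -> nb g2 C2 ->
  nb (fun u => Jp mu k f u - f u - INR k / mu * g u) (INR k ^ 2 * C2 / mu ^ 2).
Proof.
  intros Hmu Hfg Hgg Hg2. destruct (HG_CU _ _ Hfg) as [Cf Cg].
  assert (C20 : 0 <= C2) by (apply (nb_nonneg a _ _ Hg2)).
  assert (Hmu2 : 0 < mu ^ 2) by (apply pow_lt; auto).
  induction k as [|k IH]; intros u.
  - unfold Jp; simpl. replace (f u - f u - 0 / mu * g u) with 0 by (field; lra). rewrite Rabs_R0.
    right; field; lra.
  - unfold Jp. rewrite Nat.iter_succ_r. rewrite (HG_J mu f g Hmu Hfg).
    rewrite (good_addsc (fun h => Nat.iter k (J mu) h)) by (auto; try apply good_Jp; auto; apply HJ_CU; auto).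
    rewrite <- Nat.iter_succ_r.
    assert (T := tele (J mu) g (C2 / mu) (S k) (good_J mu Hmu) Cg (J_minus_id mu g g2 C2 Hmu Hgg Hg2) u).
    specialize (IH u). unfold Jp in IH.
    set (D := Nat.iter (S k) (J mu) g u - g u) in *.
    replace (Nat.iter k (J mu) f u + / mu * Nat.iter (S k) (J mu) g u - f u - INR (S k) / mu * g u)
      with ((Nat.iter k (J mu) f u - f u - INR k / mu * g u) + / mu * D) by (unfold D; rewrite S_INR; field; lra).
    assert (A1 : Rabs (/ mu * D) <= / mu * (INR (S k) * (C2 / mu))).
    { rewrite Rabs_mult, Rabs_inv, (Rabs_right mu) by lra. apply Rmult_le_compat_l.
      left; apply Rinv_0_lt_compat; lra. auto. }
    assert (A2 : INR (S k) ^ 2 * C2 / mu ^ 2 - (INR k ^ 2 * C2 / mu ^ 2 + / mu * (INR (S k) * (C2 / mu)))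
       = INR k * C2 / mu ^ 2) by (rewrite S_INR; field; lra).
    assert (A3 : 0 <= INR k * C2 / mu ^ 2).
    { apply Rmult_le_pos. apply Rmult_le_pos; auto. apply pos_INR. left; apply Rinv_0_lt_compat; auto. }
    rlra.
Qed.

Lemma Jp_CU l k f : 0 < l -> CU a f -> CU a (Jp l k f).
Proof. intros. apply (good_CU (fun f => Jp l k f)); auto. apply good_Jp; auto. Qed.

Lemma cauchy_D2 N M t f g g2 C1 C2 : (0 < N)%nat -> (0 < M)%nat -> 0 <= t ->
  G f g -> G g g2 -> nb g C1 -> nb g2 C2 ->
  nb (fun u => sN N t f u - sN (N * M) t f u) ((2 * t * C2 + C1) / INR N).
Proof.
  intros HN HM Ht Hfg Hgg Hg Hg2. destruct (HG_CU _ _ Hfg) as [Cf Cg].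
  assert (C10 : 0 <= C1) by (apply (nb_nonneg a _ _ Hg)).
  assert (C20 : 0 <= C2) by (apply (nb_nonneg a _ _ Hg2)).
  set (l := INR N). assert (Hl : 0 < l) by (apply lt_0_INR; auto).
  set (m := INR M). assert (Hm : 0 < m) by (apply lt_0_INR; auto).
  set (mu := INR (N * M)). assert (Hmu : mu = l * m) by (apply mult_INR).
  assert (Hmu0 : 0 < mu) by (rewrite Hmu; apply Rmult_lt_0_compat; auto).
  unfold sN. fold l mu.
  set (p := fl (l * t)). set (q := fl (mu * t)).
  assert (Hlt : 0 <= l * t) by (apply Rmult_le_pos; lra).
  assert (Hmt : 0 <= mu * t) by (apply Rmult_le_pos; lra).
  destruct (fl_spec (l * t) Hlt) as [Hp1 Hp2]. fold p in Hp1, Hp2.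
  assert (Hq1 : (M * p <= q)%nat).
  { apply fl_ge; auto. rewrite mult_INR. fold m. rewrite Hmu.
    replace (l * m * t) with (m * (l * t)) by ring. apply Rmult_le_compat_l; lra. }
  assert (Hq2 : (q < M * p + M)%nat).
  { apply fl_lt; auto. rewrite plus_INR, mult_INR. fold m. rewrite Hmu.
    replace (l * m * t) with (m * (l * t)) by ring. nra. }
  set (r := (q - M * p)%nat).
  assert (Hq : q = (r + M * p)%nat) by (unfold r; lia).
  assert (Hr : (r < M)%nat) by (unfold r; lia).
  set (Y := fun h => Jp mu M h).
  assert (GY : good Y) by (apply good_Jp; auto).
  assert (GX : good (J l)) by (apply good_J; auto).
  assert (E : Jp mu q f = Nat.iter p Y (Jp mu r f)).
  { unfold Jp. rewrite Hq, Nat.iter_add, iter_swap, iter_mul. reflexivity. }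
  rewrite E.
  assert (B1 : nb (fun u => J l f u - Y f u) (2 * C2 / l ^ 2)).
  { intros u. assert (H1 := est_k l 1 f g g2 C2 Hl Hfg Hgg Hg2 u).
    assert (H2 := est_k mu M f g g2 C2 Hmu0 Hfg Hgg Hg2 u).
    unfold Jp in H1. simpl Nat.iter in H1. unfold Y. fold m in H2.
    replace (m / mu) with (1 / l) in H2 by (rewrite Hmu; field; lra).
    replace (m ^ 2 * C2 / mu ^ 2) with (C2 / l ^ 2) in H2 by (rewrite Hmu; field; lra).
    replace (INR 1 / l) with (1 / l) in H1 by (simpl; field; lra).
    replace (INR 1 ^ 2 * C2 / l ^ 2) with (C2 / l ^ 2) in H1 by (simpl; field; lra).
    replace (2 * C2 / l ^ 2) with (C2 / l ^ 2 + C2 / l ^ 2) by (field; lra). rlra. }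
  assert (CXY : commute (J l) Y).
  { intros h Hh. unfold Y, Jp. symmetry. apply (comm_iter (J mu) (J l) M); auto.
    apply good_J; auto. intros h' Hh'. apply HJ_comm; auto. }
  assert (P1 := powdiff (J l) Y f _ p GX GY CXY Cf B1).
  assert (B2 : nb (fun u => Jp mu r f u - f u) (INR r * (C1 / mu))).
  { apply (tele (J mu) f (C1 / mu) r (good_J mu Hmu0) Cf). apply (J_minus_id mu f g C1); auto. }
  assert (Cr : CU a (Jp mu r f)) by (apply Jp_CU; auto).
  assert (P2 : nb (fun u => Nat.iter p Y (Jp mu r f) u - Nat.iter p Y f u) (INR r * (C1 / mu))).
  { intros u. rewrite <- (good_sub_pt (fun h => Nat.iter p Y h)) by (auto; apply good_iter; auto).
    apply (good_nb (fun h => Nat.iter p Y h)); auto. apply good_iter; auto. apply CU_sub; auto. }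
  assert (Hrm : INR r * (C1 / mu) <= C1 / l).
  { apply lt_INR in Hr. fold m in Hr. rewrite Hmu.
    replace (C1 / l) with (m * (C1 / (l * m))) by (field; lra).
    apply Rmult_le_compat_r. apply Rmult_le_pos; auto. left; apply Rinv_0_lt_compat; nra. lra. }
  assert (Hpl : INR p * (2 * C2 / l ^ 2) <= 2 * t * C2 / l).
  { replace (2 * t * C2 / l) with ((l * t) * (2 * C2 / l ^ 2)) by (field; lra).
    apply Rmult_le_compat_r; auto. apply Rmult_le_pos. lra. left; apply Rinv_0_lt_compat; apply pow_lt; lra. }
  intros u. specialize (P1 u). specialize (P2 u). cbv beta in P1, P2. unfold Jp in P1, P2 |- *.
  replace ((2 * t * C2 + C1) / l) with (2 * t * C2 / l + C1 / l) by (field; lra).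
  rlra.
Qed.

Lemma approx_D2 f eps : CU a f -> 0 < eps ->
  exists phi psi psi2, G phi psi /\ G psi psi2 /\ nb (fun u => f u - phi u) eps.
Proof.
  intros Hf He. destruct (HJ_conv f Hf (eps/2)) as [N0 [HN0 HN]]. lra.
  set (K := INR N0). assert (HK : 0 < K) by (apply lt_0_INR; auto).
  set (f1 := J K f). assert (Cf1 : CU a f1) by (apply HJ_CU; auto).
  exists (J K f1), (fun u => K * (J K f1 u - f1 u)),
    (fun u => K * (K * (J K f1 u - f1 u)) + (- K) * (K * (f1 u - f u))).
  split; [|split].
  - apply HJ_G; auto.
  - replace (fun u => K * (J K f1 u - f1 u)) with (fun u => K * J K f1 u + (- K) * f1 u)
      by (apply functional_extensionality; intros; ring).
    apply HG_lin. apply HJ_G; auto. apply HJ_G; auto.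
  - intros u. assert (A1 := HN N0 (le_n _) u). fold K in A1. fold f1 in A1.
    assert (A2 := good_nb _ _ _ (good_J K HK) (CU_sub _ _ Cf1 Hf) (HN N0 (le_n _)) u).
    fold K in A2. cbv beta in A2. rewrite good_sub_pt in A2 by (auto; apply good_J; auto).
    fold f1 in A2. rlra.
Qed.

Lemma good_sN N t : (0 < N)%nat -> good (sN N t).
Proof. intros. apply good_Jp. apply lt_0_INR; auto. Qed.

Lemma sN_cauchy f t : CU a f -> 0 <= t -> forall eps, 0 < eps ->
  exists N0, (0 < N0)%nat /\ forall N M, (N0 <= N)%nat -> (N0 <= M)%nat ->
    nb (fun u => sN N t f u - sN M t f u) eps.
Proof.
  intros Hf Ht eps He.
  destruct (approx_D2 f (eps/4) Hf) as [phi [psi [psi2 [H1 [H2 H3]]]]]. lra.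
  destruct (HG_CU _ _ H1) as [Cphi Cpsi]. destruct (HG_CU _ _ H2) as [_ Cpsi2].
  destruct (CU_bounded psi Cpsi) as [C1 HC1]. destruct (CU_bounded psi2 Cpsi2) as [C2 HC2].
  assert (C10 : 0 <= C1) by (apply (nb_nonneg a _ _ HC1)).
  assert (C20 : 0 <= C2) by (apply (nb_nonneg a _ _ HC2)).
  destruct (big_N (2 * t * C2 + C1) (eps / 4)) as [N1 [HN1 HB]].
  { assert (0 <= t * C2) by (apply Rmult_le_pos; auto). lra. } lra.
  exists N1. split; auto. intros N M HN HM u.
  assert (HNp : (0 < N)%nat) by lia. assert (HMp : (0 < M)%nat) by lia.
  assert (A1 := cauchy_D2 N M t phi psi psi2 C1 C2 HNp HMp Ht H1 H2 HC1 HC2 u).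
  assert (A2 := cauchy_D2 M N t phi psi psi2 C1 C2 HMp HNp Ht H1 H2 HC1 HC2 u).
  rewrite Nat.mul_comm in A2.
  assert (A3 := good_nb _ _ _ (good_sN N t HNp) (CU_sub _ _ Hf Cphi) H3 u).
  assert (A4 := good_nb _ _ _ (good_sN M t HMp) (CU_sub _ _ Hf Cphi) H3 u).
  cbv beta in A3, A4.
  rewrite good_sub_pt in A3, A4 by (auto; apply good_sN; auto).
  assert (HB1 := HB N HN). assert (HB2 := HB M HM).
  rlra.
Qed.

Definition Tsg (t : R) (f : X) (u : U a) : R := real (Lim_seq (fun N => sN N t f u)).

Lemma T_conv f t : CU a f -> 0 <= t -> forall eps, 0 < eps ->
  exists N0, (0 < N0)%nat /\ forall N, (N0 <= N)%nat -> nb (fun u => sN N t f u - Tsg t f u) eps.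
Proof.
  intros Hf Ht eps He. destruct (sN_cauchy f t Hf Ht eps He) as [N0 [HN0 HC]].
  exists N0. split; auto. intros N HN u.
  apply (lim_bound (fun N => sN N t f u) _ N0); auto.
  apply cauchy_islim. intros e He'. destruct (sN_cauchy f t Hf Ht e He') as [N1 [_ HC1]].
  exists N1. intros n m Hn Hm. apply HC1; auto.
  intros n m Hn Hm. apply HC; auto.
Qed.

Lemma T_bound f t h B C : CU a f -> 0 <= t -> 0 <= C ->
  (forall N, (0 < N)%nat -> nb (fun u => sN N t f u - h u) (B + C / INR N)) ->
  nb (fun u => Tsg t f u - h u) B.
Proof.
  intros Hf Ht HC H u. apply Rle_plus_epsilon. intros eps He.
  destruct (T_conv f t Hf Ht (eps/2)) as [N0 [HN0 HN]]. lra.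
  destruct (big_N C (eps/2) HC) as [N1 [HN1 HB]]. lra.
  set (N := Nat.max N0 N1).
  assert (A1 := HN N (Nat.le_max_l _ _) u).
  assert (A2 := H N ltac:(lia) u).
  assert (A3 := HB N (Nat.le_max_r _ _)).
  rlra.
Qed.

Lemma lin_small c d x y eps : 0 < eps ->
  Rabs x <= eps / (Rabs c + Rabs d + 1) -> Rabs y <= eps / (Rabs c + Rabs d + 1) ->
  Rabs (c * x + d * y) <= eps.
Proof.
  intros He Hx Hy. remember (Rabs c + Rabs d + 1) as K eqn:HKdef.
  assert (HK : 0 < K) by (rewrite HKdef; generalize (Rabs_pos c) (Rabs_pos d); lra).
  eapply Rle_trans. apply Rabs_triang. rewrite !Rabs_mult.
  assert (B1 : Rabs c * Rabs x <= Rabs c * (eps / K)) by (apply Rmult_le_compat_l; auto; apply Rabs_pos).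
  assert (B2 : Rabs d * Rabs y <= Rabs d * (eps / K)) by (apply Rmult_le_compat_l; auto; apply Rabs_pos).
  assert (E : eps = K * (eps / K)) by (field; lra).
  assert (0 < eps / K) by (apply Rdiv_lt_0_compat; lra).
  assert (K * (eps / K) = Rabs c * (eps / K) + Rabs d * (eps / K) + eps / K) by (rewrite HKdef; ring).
  lra.
Qed.

Lemma T_lin t f g c d : 0 <= t -> CU a f -> CU a g ->
  Tsg t (fun u => c * f u + d * g u) = (fun u => c * Tsg t f u + d * Tsg t g u).
Proof.
  intros Ht Hf Hg. apply functional_extensionality. intros u. unfold Tsg at 1.
  apply lim_char. intros eps He.
  assert (HK : 0 < Rabs c + Rabs d + 1) by (generalize (Rabs_pos c) (Rabs_pos d); lra).
  destruct (T_conv f t Hf Ht (eps / (Rabs c + Rabs d + 1))) as [N1 [HN1 H1]].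
  apply Rdiv_lt_0_compat; lra.
  destruct (T_conv g t Hg Ht (eps / (Rabs c + Rabs d + 1))) as [N2 [HN2 H2]].
  apply Rdiv_lt_0_compat; lra.
  exists (Nat.max N1 N2). intros N HN.
  assert (HNp : (0 < N)%nat) by lia.
  destruct (good_sN N t HNp) as [_ [HL _]]. rewrite HL by auto.
  assert (A1 := H1 N ltac:(lia) u). assert (A2 := H2 N ltac:(lia) u). cbv beta in A1, A2.
  replace (c * sN N t f u + d * sN N t g u - (c * Tsg t f u + d * Tsg t g u))
    with (c * (sN N t f u - Tsg t f u) + d * (sN N t g u - Tsg t g u)) by ring.
  apply lin_small; auto.
Qed.

Lemma T_contr t f B : 0 <= t -> CU a f -> nb f B -> nb (Tsg t f) B.
Proof.
  intros Ht Hf HB u. assert (H := T_bound f t (fun _ => 0) B 0 Hf Ht (Rle_refl 0)).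
  assert (H' : nb (fun u => Tsg t f u - 0) B).
  { apply H. intros N HN v. unfold Rdiv. rewrite Rmult_0_l, Rplus_0_r, Rminus_0_r.
    apply (good_nb _ _ _ (good_sN N t HN)); auto. }
  specialize (H' u). cbv beta in H'. rewrite Rminus_0_r in H'. auto.
Qed.

Lemma T_zero f u : Tsg 0 f u = f u.
Proof.
  unfold Tsg. apply lim_char. intros eps He. exists 0%nat. intros n _.
  unfold sN. rewrite Rmult_0_r, fl_0. unfold Jp. simpl. rewrite Rminus_eq_0, Rabs_R0. lra.
Qed.

Lemma T_CU t f : 0 <= t -> CU a f -> CU a (Tsg t f).
Proof.
  intros Ht Hf. apply CU_ulim. intros eps He.
  destruct (T_conv f t Hf Ht eps He) as [N0 [HN0 H]]. exists (sN N0 t f). split.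
  apply good_CU; auto. apply good_sN; auto.
  intros u. rewrite Rabs_minus_sym. apply H; auto.
Qed.

Lemma Jp_pos l k f : 0 < l -> CU a f -> (forall u, 0 <= f u) -> forall u, 0 <= Jp l k f u.
Proof.
  intros Hl Hf Hp. induction k as [|k IH]; intros u; unfold Jp; simpl; auto.
  apply HJ_pos; auto. apply Jp_CU; auto.
Qed.

Lemma Jp_one l k : 0 < l -> Jp l k (fun _ => 1) = (fun _ => 1).
Proof.
  intros Hl. induction k as [|k IH]; unfold Jp in *; simpl; auto. rewrite IH. apply HJ_one; auto.
Qed.

Lemma T_pos t f : 0 <= t -> CU a f -> (forall u, 0 <= f u) -> forall u, 0 <= Tsg t f u.
Proof.
  intros Ht Hf Hp u. apply Rle_plus_epsilon. intros eps He.
  destruct (T_conv f t Hf Ht eps He) as [N0 [HN0 H]].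
  assert (A := H N0 (le_n _) u). assert (B := Jp_pos (INR N0) (fl (INR N0 * t)) f (lt_0_INR _ HN0) Hf Hp u).
  unfold sN in A. rlra.
Qed.

Lemma T_one t u : Tsg t (fun _ => 1) u = 1.
Proof.
  unfold Tsg. apply lim_char. intros eps He. exists 1%nat. intros n Hn.
  unfold sN. rewrite Jp_one by (apply lt_0_INR; lia). rewrite Rminus_eq_0, Rabs_R0. lra.
Qed.

Lemma good_comp Y Z : good Y -> good Z -> good (fun h => Y (Z h)).
Proof.
  intros HY HZ. split; [|split].
  - intros. apply good_CU; auto. apply good_CU; auto.
  - intros. destruct HZ as [Z1 [Z2 Z3]]. rewrite Z2 by auto. destruct HY as [Y1 [Y2 Y3]]. apply Y2; auto.
  - intros. apply good_nb; auto. apply good_CU; auto. apply good_nb; auto.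
Qed.

Lemma T_semi t s f : 0 <= t -> 0 <= s -> CU a f -> Tsg (t + s) f = Tsg t (Tsg s f).
Proof.
  intros Ht Hs Hf. apply functional_extensionality. intros u. unfold Tsg at 1.
  apply lim_char. intros eps He.
  set (g := Tsg s f). assert (Cg : CU a g) by (apply T_CU; auto).
  destruct (HJ_conv f Hf (eps/3)) as [N1 [HN1 H1]]. lra.
  destruct (T_conv f s Hf Hs (eps/3)) as [N2 [HN2 H2]]. lra.
  destruct (T_conv g t Cg Ht (eps/3)) as [N3 [HN3 H3]]. lra.
  exists (Nat.max N1 (Nat.max N2 N3)). intros N HN.
  assert (HNp : (0 < N)%nat) by lia.
  set (l := INR N). assert (Hl : 0 < l) by (apply lt_0_INR; auto).
  set (p1 := fl (l * t)). set (p2 := fl (l * s)). set (q := fl (l * (t + s))).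
  assert (Hlt : 0 <= l * t) by (apply Rmult_le_pos; lra).
  assert (Hls : 0 <= l * s) by (apply Rmult_le_pos; lra).
  assert (Hlts : 0 <= l * (t + s)) by (apply Rmult_le_pos; lra).
  destruct (fl_spec _ Hlt) as [F1 F2]. destruct (fl_spec _ Hls) as [F3 F4]. fold p1 in F1, F2. fold p2 in F3, F4.
  assert (Q1 : (p1 + p2 <= q)%nat). { apply fl_ge; auto. rewrite plus_INR. fold p1 p2. lra. }
  assert (Q2 : (q < p1 + p2 + 2)%nat). { apply fl_lt; auto. rewrite !plus_INR. fold p1 p2. simpl. lra. }
  set (e := (q - (p1 + p2))%nat).
  assert (Hq : q = (p1 + (p2 + e))%nat) by (unfold e; lia).
  assert (He1 : INR e <= 1). { replace 1 with (INR 1) by reflexivity. apply le_INR. unfold e. lia. }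
  unfold sN. fold l. fold q. unfold Jp. rewrite Hq, !Nat.iter_add.
  assert (G1 := good_Jp l p1 Hl). assert (G2 := good_Jp l p2 Hl).
  assert (G12 := good_comp _ _ G1 G2).
  assert (Ce : CU a (Nat.iter e (J l) f)) by (apply Jp_CU; auto).
  assert (T1 := tele (J l) f (eps/3) e (good_J l Hl) Hf (H1 N ltac:(lia))).
  assert (D1 := good_nb _ _ _ G12 (CU_sub _ _ Ce Hf) T1 u). cbv beta in D1.
  assert (E1 : Jp l p1 (Jp l p2 (fun v => Nat.iter e (J l) f v - f v)) u =
     Jp l p1 (Jp l p2 (Nat.iter e (J l) f)) u - Jp l p1 (Jp l p2 f) u)
    by (apply (good_sub_pt (fun h => Jp l p1 (Jp l p2 h))); auto).
  rewrite E1 in D1. unfold Jp in D1.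
  assert (Cs : CU a (Nat.iter p2 (J l) f)) by (apply Jp_CU; auto).
  assert (D2 := good_nb _ _ _ G1 (CU_sub _ _ Cs Cg) (H2 N ltac:(lia)) u). cbv beta in D2.
  assert (E2 : Jp l p1 (fun v => Nat.iter p2 (J l) f v - g v) u =
     Jp l p1 (Nat.iter p2 (J l) f) u - Jp l p1 g u)
    by (apply (good_sub_pt (fun h => Jp l p1 h)); auto).
  rewrite E2 in D2. unfold Jp in D2.
  assert (D3 := H3 N ltac:(lia) u). unfold sN, Jp in D3. fold l in D3. fold p1 in D3.
  assert (INR e * (eps / 3) <= eps / 3) by nra.
  rlra.
Qed.

Lemma approx_D1 g eps : CU a g -> 0 < eps ->
  exists phi psi, G phi psi /\ nb (fun u => g u - phi u) eps.
Proof.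
  intros Hg He. destruct (HJ_conv g Hg eps He) as [K [HK HN]].
  exists (J (INR K) g), (fun u => INR K * (J (INR K) g u - g u)). split.
  apply HJ_G; auto. apply lt_0_INR; auto.
  intros u. rewrite Rabs_minus_sym. apply HN; auto.
Qed.

Lemma T_strong f : CU a f -> forall eps, 0 < eps ->
  exists d, 0 < d /\ forall t, 0 <= t < d -> nb (fun u => Tsg t f u - f u) eps.
Proof.
  intros Hf eps He.
  destruct (approx_D1 f (eps/4) Hf) as [phi [psi [HG1 Hphi]]]. lra.
  destruct (HG_CU _ _ HG1) as [Cphi Cpsi]. destruct (CU_bounded psi Cpsi) as [C HC].
  assert (C0 : 0 <= C) by (apply (nb_nonneg a _ _ HC)).
  exists (eps / (2 * (C + 1))). split. apply Rdiv_lt_0_compat; lra.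
  intros t [Ht1 Ht2].
  assert (HtC : t * C <= eps / 2).
  { assert (t * (2 * (C + 1)) < eps).
    { apply (Rmult_lt_compat_r (2 * (C + 1))) in Ht2. 2: lra.
      replace (eps / (2 * (C + 1)) * (2 * (C + 1))) with eps in Ht2 by (field; lra). auto. }
    nra. }
  intros u. apply (Rle_trans _ (eps / 4 + eps / 4 + t * C)); [| lra].
  revert u. apply (T_bound f t f _ 0 Hf Ht1 (Rle_refl 0)).
  intros N HN u. replace (0 / INR N) with 0 by (unfold Rdiv; ring). rewrite Rplus_0_r.
  set (l := INR N). assert (Hl : 0 < l) by (apply lt_0_INR; auto).
  assert (A1 := good_nb _ _ _ (good_sN N t HN) (CU_sub _ _ Hf Cphi) Hphi u). cbv beta in A1.
  rewrite good_sub_pt in A1 by (auto; apply good_sN; auto).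
  assert (A2 := tele (J l) phi (C / l) (fl (l * t)) (good_J l Hl) Cphi (J_minus_id l phi psi C Hl HG1 HC) u).
  assert (A3 := Hphi u). cbv beta in A2, A3.
  assert (Hlt : 0 <= l * t) by (apply Rmult_le_pos; lra).
  destruct (fl_spec _ Hlt) as [F1 F2].
  assert (A4 : INR (fl (l * t)) * (C / l) <= t * C).
  { replace (t * C) with ((l * t) * (C / l)) by (field; lra). apply Rmult_le_compat_r; auto.
    apply Rmult_le_pos; auto. left; apply Rinv_0_lt_compat; auto. }
  unfold sN in A1 |- *. fold l in A1 |- *. unfold Jp in A1 |- *.
  rlra.
Qed.

Lemma est_gen l k f g phi psi delta C : 0 < l -> G f g -> G phi psi ->
  nb (fun u => g u - phi u) delta -> nb psi C ->
  nb (fun u => Jp l k f u - f u - INR k / l * g u) (2 * delta * INR k / l + C * INR k ^ 2 / l ^ 2).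
Proof.
  intros Hl Hfg Hpp Hd HC. destruct (HG_CU _ _ Hfg) as [Cf Cg]. destruct (HG_CU _ _ Hpp) as [Cphi Cpsi].
  assert (C0 : 0 <= C) by (apply (nb_nonneg a _ _ HC)).
  assert (d0 : 0 <= delta) by (apply (nb_nonneg a _ _ Hd)).
  assert (Hl2 : 0 < l ^ 2) by (apply pow_lt; auto).
  induction k as [|k IH]; intros u.
  - unfold Jp; simpl. replace (f u - f u - 0 / l * g u) with 0 by (field; lra). rewrite Rabs_R0.
    right; field; lra.
  - unfold Jp. rewrite Nat.iter_succ_r. rewrite (HG_J l f g Hl Hfg).
    rewrite (good_addsc (fun h => Nat.iter k (J l) h)) by (auto; try apply good_Jp; auto; apply HJ_CU; auto).
    rewrite <- Nat.iter_succ_r.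
    assert (GS := good_Jp l (S k) Hl).
    assert (T1 := good_nb _ _ _ GS (CU_sub _ _ Cg Cphi) Hd u). cbv beta in T1.
    assert (E1 : Jp l (S k) (fun v => g v - phi v) u = Jp l (S k) g u - Jp l (S k) phi u)
      by (apply (good_sub_pt (fun h => Jp l (S k) h)); auto).
    rewrite E1 in T1. unfold Jp in T1.
    assert (T2 := tele (J l) phi (C / l) (S k) (good_J l Hl) Cphi (J_minus_id l phi psi C Hl Hpp HC) u).
    assert (T3 := Hd u). cbv beta in T2, T3.
    specialize (IH u). unfold Jp in IH.
    set (D := Nat.iter (S k) (J l) g u - g u) in *.
    replace (Nat.iter k (J l) f u + / l * Nat.iter (S k) (J l) g u - f u - INR (S k) / l * g u)
      with ((Nat.iter k (J l) f u - f u - INR k / l * g u) + / l * D) by (unfold D; rewrite S_INR; field; lra).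
    assert (HD : Rabs D <= 2 * delta + INR (S k) * (C / l)) by (unfold D; rlra).
    assert (A1 : Rabs (/ l * D) <= / l * (2 * delta + INR (S k) * (C / l))).
    { rewrite Rabs_mult, Rabs_inv, (Rabs_right l) by lra. apply Rmult_le_compat_l.
      left; apply Rinv_0_lt_compat; lra. auto. }
    assert (A2 : 2 * delta * INR (S k) / l + C * INR (S k) ^ 2 / l ^ 2 -
       (2 * delta * INR k / l + C * INR k ^ 2 / l ^ 2 + / l * (2 * delta + INR (S k) * (C / l)))
       = C * INR k / l ^ 2) by (rewrite S_INR; field; lra).
    assert (A3 : 0 <= C * INR k / l ^ 2).
    { apply Rmult_le_pos. apply Rmult_le_pos; auto. apply pos_INR. left; apply Rinv_0_lt_compat; auto. }
    rlra.
Qed.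

Lemma T_gen_fwd f g : G f g -> gen_graph a Tsg f g.
Proof.
  intros Hfg eps He. destruct (HG_CU _ _ Hfg) as [Cf Cg].
  destruct (approx_D1 g (eps/4) Cg) as [phi [psi [Hpp Hphi]]]. lra.
  destruct (HG_CU _ _ Hpp) as [Cphi Cpsi]. destruct (CU_bounded psi Cpsi) as [C HC].
  destruct (CU_bounded g Cg) as [Cg0 HCg].
  assert (C0 : 0 <= C) by (apply (nb_nonneg a _ _ HC)).
  assert (Cg00 : 0 <= Cg0) by (apply (nb_nonneg a _ _ HCg)).
  exists (eps / (2 * (C + 1))). split. apply Rdiv_lt_0_compat; lra.
  intros h [Hh1 Hh2].
  assert (HhC : h * C <= eps / 2).
  { assert (h * (2 * (C + 1)) < eps).
    { apply (Rmult_lt_compat_r (2 * (C + 1))) in Hh2. 2: lra.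
      replace (eps / (2 * (C + 1)) * (2 * (C + 1))) with eps in Hh2 by (field; lra). auto. }
    nra. }
  assert (B := T_bound f h (fun u => f u + h * g u) (2 * (eps / 4) * h + C * h ^ 2) Cg0 Cf ltac:(lra) Cg00).
  assert (B' : nb (fun u => Tsg h f u - (f u + h * g u)) (2 * (eps / 4) * h + C * h ^ 2)).
  { apply B. intros N HN u.
    set (l := INR N). assert (Hl : 0 < l) by (apply lt_0_INR; auto).
    assert (Hlt : 0 <= l * h) by (apply Rmult_le_pos; lra).
    destruct (fl_spec _ Hlt) as [F1 F2].
    set (p := fl (l * h)) in *.
    assert (A1 := est_gen l p f g phi psi (eps/4) C Hl Hfg Hpp Hphi HC u).
    assert (Hp1 : INR p / l <= h) by (apply (Rmult_le_reg_r l); auto; unfold Rdiv; rewrite Rmult_assoc, Rinv_l; lra).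
    assert (Hp2 : h - 1 / l < INR p / l).
    { apply (Rmult_lt_reg_r l); auto. unfold Rdiv. rewrite Rmult_assoc, Rinv_l by lra.
      replace ((h - 1 * / l) * l) with (l * h - 1) by (field; lra). lra. }
    assert (Hp0 : 0 <= INR p / l) by (apply Rmult_le_pos; [apply pos_INR | left; apply Rinv_0_lt_compat; auto]).
    assert (A2 : 2 * (eps / 4) * INR p / l + C * INR p ^ 2 / l ^ 2 <= 2 * (eps / 4) * h + C * h ^ 2).
    { replace (2 * (eps / 4) * INR p / l + C * INR p ^ 2 / l ^ 2) with
        (2 * (eps / 4) * (INR p / l) + C * (INR p / l) ^ 2) by (field; lra).
      assert ((INR p / l) ^ 2 <= h ^ 2) by (apply pow_incr; lra). nra. }
    assert (A3 : Rabs ((INR p / l - h) * g u) <= Cg0 / l).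
    { rewrite Rabs_mult. replace (Cg0 / l) with ((1 / l) * Cg0) by (field; lra).
      apply Rmult_le_compat. apply Rabs_pos. apply Rabs_pos. rlra. apply HCg. }
    unfold sN. fold l. fold p.
    replace (Jp l p f u - (f u + h * g u)) with
      ((Jp l p f u - f u - INR p / l * g u) + (INR p / l - h) * g u) by ring.
    rlra. }
  intros u. specialize (B' u). cbv beta in B'.
  replace ((Tsg h f u - f u) / h - g u) with (/ h * (Tsg h f u - (f u + h * g u))) by (field; lra).
  rewrite Rabs_mult, Rabs_inv, (Rabs_right h) by lra.
  apply (Rle_trans _ (/ h * (2 * (eps / 4) * h + C * h ^ 2))).
  apply Rmult_le_compat_l; auto. left; apply Rinv_0_lt_compat; auto.
  replace (/ h * (2 * (eps / 4) * h + C * h ^ 2)) with (eps / 2 + h * C) by (field; lra).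
  lra.
Qed.

Lemma gen_unique f g1 g2 : gen_graph a Tsg f g1 -> gen_graph a Tsg f g2 -> forall u, g1 u = g2 u.
Proof.
  intros H1 H2 u.
  assert (Habs : Rabs (g1 u - g2 u) <= 0).
  { apply Rle_plus_epsilon. intros eps He.
    destruct (H1 (eps/2)) as [d1 [Hd1 K1]]. lra. destruct (H2 (eps/2)) as [d2 [Hd2 K2]]. lra.
    set (h := Rmin d1 d2 / 2).
    assert (Hh : 0 < h) by (unfold h; generalize (Rmin_pos d1 d2 Hd1 Hd2); lra).
    assert (Hh1 : h < d1) by (unfold h; generalize (Rmin_l d1 d2) (Rmin_pos d1 d2 Hd1 Hd2); lra).
    assert (Hh2 : h < d2) by (unfold h; generalize (Rmin_r d1 d2) (Rmin_pos d1 d2 Hd1 Hd2); lra).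
    specialize (K1 h (conj Hh Hh1) u). specialize (K2 h (conj Hh Hh2) u). rlra. }
  generalize (Rabs_pos (g1 u - g2 u)). intros. assert (Rabs (g1 u - g2 u) = 0) by lra.
  apply Rabs_eq_0 in H0. lra.
Qed.

Lemma J_T_comm l t f : 0 < l -> 0 <= t -> CU a f -> forall u, Tsg t (J l f) u = J l (Tsg t f) u.
Proof.
  intros Hl Ht Hf u. unfold Tsg at 1. apply lim_char. intros eps He.
  destruct (T_conv f t Hf Ht eps He) as [N0 [HN0 H]].
  exists N0. intros N HN. assert (HNp : (0 < N)%nat) by lia.
  assert (E : sN N t (J l f) = J l (sN N t f)).
  { unfold sN, Jp. refine (comm_iter (J (INR N)) (J l) (fl (INR N * t)) _ _ _ f Hf).
    apply good_J, lt_0_INR; auto. apply good_J; auto. intros h Hh. apply HJ_comm; auto. apply lt_0_INR; auto. }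
  rewrite E.
  assert (Cs : CU a (sN N t f)) by (apply good_CU; auto; apply good_sN; auto).
  assert (Ct : CU a (Tsg t f)) by (apply T_CU; auto).
  assert (A := good_nb _ _ _ (good_J l Hl) (CU_sub _ _ Cs Ct) (H N HN) u). cbv beta in A.
  rewrite good_sub_pt in A by (auto; apply good_J; auto). auto.
Qed.

Lemma T_gen_rev f g : CU a f -> CU a g -> gen_graph a Tsg f g -> G f g.
Proof.
  intros Hf Hg Hgen.
  assert (H1 : gen_graph a Tsg (J 1 f) (J 1 g)).
  { intros eps He. destruct (Hgen eps He) as [d [Hd K]]. exists d. split; auto.
    intros h Hh u. assert (Hh0 : 0 <= h) by lra.
    assert (CT : CU a (Tsg h f)) by (apply T_CU; auto).
    set (w := fun v => / h * (Tsg h f v - f v) + (-1) * g v).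
    assert (Cw : CU a w) by (apply CU_lin; auto; apply CU_sub; auto).
    assert (Hw : nb w eps).
    { intros v. unfold w. specialize (K h Hh v).
      replace (/ h * (Tsg h f v - f v) + -1 * g v) with ((Tsg h f v - f v) / h - g v) by (field; lra). auto. }
    assert (A := good_nb _ _ _ (good_J 1 Rlt_0_1) Cw Hw u).
    unfold w in A. rewrite HJ_lin in A by (auto; try lra; apply CU_sub; auto).
    rewrite good_sub_pt in A by (auto; apply good_J; lra).
    rewrite <- J_T_comm in A by (auto; lra).
    replace ((Tsg h (J 1 f) u - J 1 f u) / h - J 1 g u) with
      (/ h * (Tsg h (J 1 f) u - J 1 f u) + -1 * J 1 g u) by (field; lra). auto. }
  assert (H2 : gen_graph a Tsg (J 1 f) (fun u => 1 * (J 1 f u - f u))).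
  { apply T_gen_fwd. apply HJ_G; auto; lra. }
  assert (E := gen_unique _ _ _ H1 H2).
  assert (Ef : J 1 (fun u => f u - g u) = f).
  { apply functional_extensionality; intros u. rewrite good_sub_pt by (auto; apply good_J; lra).
    rewrite E. ring. }
  assert (HG1 := HJ_G 1 (fun u => f u - g u) Rlt_0_1 (CU_sub _ _ Hf Hg)).
  rewrite Ef in HG1.
  replace g with (fun u => 1 * (f u - (f u - g u))); auto.
  apply functional_extensionality; intros; ring.
Qed.

Theorem abstract_main : exists T, conservative_Feller_semigroup a T /\
  (forall f g, CU a f -> CU a g -> (gen_graph a T f g <-> G f g)).
Proof.
  exists Tsg. split.
  - unfold conservative_Feller_semigroup. split; [|split; [|split; [|split; [|split; [|split; [|split]]]]]].
    + intros; apply T_CU; auto.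
    + intros t f g c d Ht Hf Hg u. rewrite T_lin; auto.
    + intros t Ht. exists 1. intros f B Hf HB u. rewrite Rmult_1_l. apply T_contr; auto.
    + intros f _ u. apply T_zero.
    + intros t s f Ht Hs Hf u. rewrite T_semi; auto.
    + intros f Hf eps He. destruct (T_strong f Hf eps He) as [d [Hd K]]. exists d. split; auto.
    + intros; apply T_pos; auto.
    + intros; apply T_one.
  - intros f g Hf Hg. split.
    + apply T_gen_rev; auto.
    + apply T_gen_fwd.
Qed.

End Abs.

Definition ch (x : R) := (exp x + exp (- x)) / 2.
Definition sh (x : R) := (exp x - exp (- x)) / 2.

Lemma ch_pos x : 0 < ch x.
Proof. unfold ch. generalize (exp_pos x) (exp_pos (-x)). lra. Qed.

Lemma sh_nonpos x : x <= 0 -> sh x <= 0.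
Proof.
  intros H. unfold sh. assert (exp x <= exp (- x)). { destruct (Req_dec x 0). subst. rewrite Ropp_0. lra.
  left. apply exp_increasing. lra. } lra.
Qed.

Lemma sh_pos x : 0 < x -> 0 < sh x.
Proof. intros H. unfold sh. assert (exp (- x) < exp x) by (apply exp_increasing; lra). lra. Qed.

Lemma sh_0 : sh 0 = 0.
Proof. unfold sh. rewrite Ropp_0. lra. Qed.

Lemma ch_0 : ch 0 = 1.
Proof. unfold ch. rewrite Ropp_0, exp_0. lra. Qed.

Lemma d_chl c d x : is_derive (fun t => ch (c * t + d)) x (c * sh (c * x + d)).
Proof. unfold ch, sh. auto_derive. auto. field. Qed.

Lemma d_shl c d x : is_derive (fun t => sh (c * t + d)) x (c * ch (c * x + d)).
Proof. unfold ch, sh. auto_derive. auto. field. Qed.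

Lemma is_derive_eq (f : R -> R) (x d d' : R) : is_derive f x d -> d = d' -> is_derive f x d'.
Proof. intros H <-; auto. Qed.

Lemma d_mult (f g : R -> R) (x df dg : R) : is_derive f x df -> is_derive g x dg ->
  is_derive (fun t => f t * g t) x (df * g x + f x * dg).
Proof. intros. apply (is_derive_mult f g x df dg); auto. intros; apply Rmult_comm. Qed.

Lemma d_plus (f g : R -> R) (x df dg : R) : is_derive f x df -> is_derive g x dg ->
  is_derive (fun t => f t + g t) x (df + dg).
Proof. intros. apply (is_derive_plus f g x df dg); auto. Qed.

Lemma d_minus (f g : R -> R) (x df dg : R) : is_derive f x df -> is_derive g x dg ->
  is_derive (fun t => f t - g t) x (df - dg).
Proof. intros. apply (is_derive_minus f g x df dg); auto. Qed.

Lemma d_scal (c : R) (f : R -> R) (x df : R) : is_derive f x df -> is_derive (fun t => c * f t) x (c * df).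
Proof. intros. apply is_derive_scal; auto. Qed.

Lemma d_divc (c : R) (f : R -> R) (x df : R) : is_derive f x df -> is_derive (fun t => f t / c) x (df / c).
Proof.
  intros H. apply (is_derive_ext (fun t => / c * f t)).
  - intros t. change (/ c * f t = f t / c). unfold Rdiv; ring.
  - replace (df / c) with (/ c * df) by (unfold Rdiv; ring). apply is_derive_scal; auto.
Qed.

Lemma d_opp (f : R -> R) (x df : R) : is_derive f x df -> is_derive (fun t => - f t) x (- df).
Proof. intros. apply (is_derive_opp f x df); auto. Qed.

Lemma W_ident om b x a : om <> 0 ->
  (om * sh (om * x) - b * ch (om * x)) * ch (om * (x - a)) -
  om * sh (om * (x - a)) * (ch (om * x) - b / om * sh (om * x)) =
  - (om * sh (om * (- a)) + b * ch (om * (- a))).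
Proof.
  intros Hom. unfold ch, sh.
  replace (om * (x - a)) with (om * x + - (om * a)) by ring.
  replace (om * (- a)) with (- (om * a)) by ring.
  rewrite !Ropp_plus_distr, !Ropp_involutive, !exp_plus, !exp_Ropp.
  assert (exp (om * x) > 0) by apply exp_pos. assert (exp (om * a) > 0) by apply exp_pos.
  field. repeat split; lra.
Qed.

Lemma is_derive_ext' (f g : R -> R) (x l : R) : (forall t, f t = g t) -> is_derive f x l -> is_derive g x l.
Proof. intros H1 H2. apply (is_derive_ext f g x l); auto. Qed.

Lemma cont_lin_R (f g : R -> R) (x c d : R) : continuous f x -> continuous g x ->
  continuous (fun t => c * f t + d * g t) x.
Proof.
  intros Hf Hg.
  apply (continuous_ext (fun t : R => @plus R_NormedModule (@scal R_AbsRing R_NormedModule c (f t)) (@scal R_AbsRing R_NormedModule d (g t)))).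
  intros; reflexivity.
  apply (@continuous_plus R_UniformSpace R_AbsRing R_NormedModule); apply (@continuous_scal_r R_UniformSpace R_AbsRing R_NormedModule); auto.
Qed.

Lemma RInt_lin2 (f g : R -> R) c d a b : ex_RInt f a b -> ex_RInt g a b ->
  RInt (fun y => c * f y + d * g y) a b = c * RInt f a b + d * RInt g a b.
Proof. intros Hf Hg.
  rewrite (RInt_ext _ (fun y => plus (scal c (f y)) (scal d (g y)))).
  rewrite (@RInt_plus R_CompleteNormedModule). rewrite !(@RInt_scal R_CompleteNormedModule). reflexivity. auto. auto.
  apply (@ex_RInt_scal R_CompleteNormedModule); auto. apply (@ex_RInt_scal R_CompleteNormedModule); auto.
  intros. reflexivity.
Qed.

Lemma RInt_pt (f : R -> R) b : RInt f b b = 0.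
Proof. apply (@RInt_point R_CompleteNormedModule). Qed.

Lemma is_derive_cont (f : R -> R) (x l : R) : is_derive f x l -> continuity_pt f x.
Proof. intros H. apply continuity_pt_filterlim. apply (ex_derive_continuous f x). exists l; auto. Qed.

Lemma cpt (f : R -> R) (x : R) : continuous f x -> continuity_pt f x.
Proof. intros H. apply continuity_pt_filterlim. exact H. Qed.
Lemma cpt' (f : R -> R) (x : R) : continuity_pt f x -> continuous f x.
Proof. intros H. apply continuity_pt_filterlim. exact H. Qed.

Lemma cext (f g : R -> R) (x : R) : (forall t, f t = g t) -> continuous f x -> continuous g x.
Proof. intros H1 H2. apply (continuous_ext f g x); auto. Qed.

Lemma RInt_ext_R (f g : R -> R) (a b : R) : (forall x, f x = g x) -> RInt f a b = RInt g a b.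
Proof. intros H. apply RInt_ext. intros; apply H. Qed.

Lemma RInt_zero a b : RInt (fun _ => 0) a b = 0.
Proof. rewrite (@RInt_const R_CompleteNormedModule). apply (@scal_zero_r R_AbsRing R_NormedModule). Qed.

Lemma ch_mono s t : 0 <= s -> s <= t -> ch s <= ch t.
Proof.
  intros Hs Hst. unfold ch.
  assert (E1 : exp s <= exp t) by (destruct (Req_dec s t) as [->|]; [lra | left; apply exp_increasing; lra]).
  assert (E2 : exp (s + t) >= 1) by (destruct (Req_dec (s + t) 0) as [->|]; [rewrite exp_0; lra | left; rewrite <- exp_0; apply exp_increasing; lra]).
  rewrite !exp_Ropp. rewrite exp_plus in E2.
  assert (Ps := exp_pos s). assert (Pt := exp_pos t).
  assert (exp t + / exp t - (exp s + / exp s) = (exp t - exp s) * (exp s * exp t - 1) / (exp s * exp t)) by (field; lra).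
  assert (0 <= (exp t - exp s) * (exp s * exp t - 1) / (exp s * exp t)).
  { apply Rmult_le_pos. apply Rmult_le_pos; lra. left; apply Rinv_0_lt_compat; nra. }
  lra.
Qed.

Lemma ch_le_3sh z : 1 <= z -> ch z <= 3 * sh z.
Proof.
  intros Hz. unfold ch, sh. rewrite exp_Ropp.
  assert (H1 : 1 + 2 * z < exp (2 * z)) by (apply exp_ineq1; lra).
  replace (2 * z) with (z + z) in H1 by ring. rewrite exp_plus in H1.
  assert (P := exp_pos z).
  assert (3 * ((exp z - / exp z) / 2) - (exp z + / exp z) / 2 = (exp z * exp z - 2) / exp z) by (field; lra).
  assert (0 <= (exp z * exp z - 2) / exp z) by (apply Rmult_le_pos; [lra | left; apply Rinv_0_lt_compat; lra]).
  lra.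
Qed.

Lemma poly_sep s r d : 0 <= s -> r <= 1 -> 0 <= d -> s + d <= r ->
  d ^ 2 <= (3 * r ^ 2 - 2 * r ^ 3) - (3 * s ^ 2 - 2 * s ^ 3).
Proof.
  intros Hs Hr Hd Hsr. set (D := r - s).
  assert (E : (3 * r ^ 2 - 2 * r ^ 3) - (3 * s ^ 2 - 2 * s ^ 3) = D ^ 2 * (3 - 2 * D) + 6 * s * D * (1 - r))
    by (unfold D; ring).
  rewrite E.
  assert (HD : d <= D) by (unfold D; lra). assert (HD1 : D <= 1) by (unfold D; lra).
  assert (A1 : d ^ 2 <= D ^ 2) by (apply pow_incr; lra).
  assert (A2 : D ^ 2 <= D ^ 2 * (3 - 2 * D)) by (assert (0 <= D ^ 2) by (apply pow2_ge_0); nra).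
  assert (A3 : 0 <= 6 * s * D * (1 - r)) by (apply Rmult_le_pos; [apply Rmult_le_pos|]; lra).
  lra.
Qed.

Section Conc.
Variables a kappa alpha beta : R.
Hypothesis Ha : a < 0.
Hypothesis Hk : 0 < kappa.
Hypothesis Hal : 0 <= alpha.
Hypothesis Hbe : 0 <= beta.

Lemma cl_proof (x : R) : a <= Rmax a (Rmin x 0) <= 0.
Proof.
  split. apply Rmax_l. apply Rmax_lub. lra. apply Rmin_r.
Qed.

Definition cl (x : R) : Iv a := exist _ (Rmax a (Rmin x 0)) (cl_proof x).

Lemma Iv_eq (x y : Iv a) : proj1_sig x = proj1_sig y -> x = y.
Proof.
  destruct x as [x Hx], y as [y Hy]. simpl. intros ->. f_equal. apply proof_irrelevance.
Qed.

Lemma cl_val x : a <= x <= 0 -> proj1_sig (cl x) = x.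
Proof.
  intros [H1 H2]. simpl. rewrite Rmin_left by lra. rewrite Rmax_right; lra.
Qed.

Lemma cl_id (y : Iv a) : cl (proj1_sig y) = y.
Proof. apply Iv_eq. apply cl_val. apply (proj2_sig y). Qed.

Lemma cl_lip x y : Rabs (proj1_sig (cl x) - proj1_sig (cl y)) <= Rabs (x - y).
Proof.
  simpl. unfold Rmax, Rmin. repeat destruct Rle_dec; unfold Rabs; repeat destruct Rcase_abs; lra.
Qed.

Lemma cl_range x : a <= proj1_sig (cl x) <= 0.
Proof. apply (proj2_sig (cl x)). Qed.

Lemma cont_ext h : cont_Iv a h -> forall x, continuity_pt (fun y => h (cl y)) x.
Proof.
  intros Hh x. unfold continuity_pt, continue_in, limit1_in, limit_in. simpl. unfold R_dist.
  intros eps He. destruct (Hh (cl x) eps He) as [d [Hd H]]. exists d. split; auto.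
  intros y [_ Hy]. apply H. eapply Rle_lt_trans. apply cl_lip. auto.
Qed.

Lemma cont_ext' h x : cont_Iv a h -> continuous (fun y => h (cl y)) x.
Proof. intros. apply continuity_pt_filterlim. apply cont_ext; auto. Qed.

Lemma cont_restrict F : (forall x, a <= x <= 0 -> continuity_pt F x) -> cont_Iv a (fun y => F (proj1_sig y)).
Proof.
  intros HF x eps He. destruct (HF (proj1_sig x) (proj2_sig x) eps He) as [d [Hd H]].
  exists d. split; auto. intros y Hy.
  destruct (Req_dec (proj1_sig y) (proj1_sig x)) as [E|E].
  - rewrite E, Rminus_eq_0, Rabs_R0. auto.
  - apply (H (proj1_sig y)). split. split. exact I. auto. auto.
Qed.

Lemma deriv_from_R F (x : Iv a) l : derivable_pt_lim F (proj1_sig x) l ->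
  deriv_Iv a (fun y => F (proj1_sig y)) x l.
Proof.
  intros H eps He. destruct (H eps He) as [d Hd]. exists d. split. apply (cond_pos d).
  intros y Hne Hy. specialize (Hd (proj1_sig y - proj1_sig x)).
  replace (proj1_sig x + (proj1_sig y - proj1_sig x)) with (proj1_sig y) in Hd by ring.
  apply Hd; auto. lra.
Qed.

Lemma deriv_to_R h x l : a < x < 0 -> deriv_Iv a h (cl x) l -> derivable_pt_lim (fun y => h (cl y)) x l.
Proof.
  intros Hx H eps He. destruct (H eps He) as [d [Hd Hd']].
  assert (Hpos : 0 < Rmin d (Rmin (x - a) (- x))) by (repeat apply Rmin_pos; lra).
  exists (mkposreal _ Hpos). intros k Hkk0 Hkk. simpl in Hkk.
  assert (Hk1 : Rabs k < d) by (generalize (Rmin_l d (Rmin (x - a) (-x))); lra).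
  assert (Hk2 : Rabs k < x - a) by (generalize (Rmin_r d (Rmin (x - a) (-x))) (Rmin_l (x - a) (-x)); lra).
  assert (Hk3 : Rabs k < - x) by (generalize (Rmin_r d (Rmin (x - a) (-x))) (Rmin_r (x - a) (-x)); lra).
  assert (E1 : proj1_sig (cl (x + k)) = x + k) by (apply cl_val; unabs; lra).
  assert (E2 : proj1_sig (cl x) = x) by (apply cl_val; lra).
  specialize (Hd' (cl (x + k))). rewrite E1, E2 in Hd'.
  replace (x + k - x) with k in Hd' by ring. apply Hd'; auto. lra.
Qed.

Lemma deriv_cont h h' : (forall x, deriv_Iv a h x (h' x)) -> cont_Iv a h.
Proof.
  intros H x eps He. destruct (H x 1 Rlt_0_1) as [d [Hd Hd']].
  set (K := Rabs (h' x) + 1). assert (HK : 0 < K) by (unfold K; generalize (Rabs_pos (h' x)); lra).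
  exists (Rmin d (eps / K)). split. apply Rmin_pos; auto. apply Rdiv_lt_0_compat; auto.
  intros y Hy.
  destruct (Req_dec (proj1_sig y) (proj1_sig x)) as [E|E].
  - rewrite (Iv_eq _ _ E), Rminus_eq_0, Rabs_R0. auto.
  - assert (Hy1 : Rabs (proj1_sig y - proj1_sig x) < d) by (generalize (Rmin_l d (eps / K)); lra).
    assert (Hy2 : Rabs (proj1_sig y - proj1_sig x) < eps / K) by (generalize (Rmin_r d (eps / K)); lra).
    specialize (Hd' y E Hy1).
    set (q := (h y - h x) / (proj1_sig y - proj1_sig x)) in *.
    assert (Eq : h y - h x = q * (proj1_sig y - proj1_sig x)) by (unfold q; field; lra).
    rewrite Eq, Rabs_mult.
    assert (Hq : Rabs q <= K) by (unfold K; generalize (Rabs_triang_inv q (h' x)); lra).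
    assert (Hp : 0 < Rabs (proj1_sig y - proj1_sig x)) by (apply Rabs_pos_lt; lra).
    apply (Rle_lt_trans _ (K * Rabs (proj1_sig y - proj1_sig x))).
    apply Rmult_le_compat_r; lra.
    replace eps with (K * (eps / K)) by (field; lra). apply Rmult_lt_compat_l; auto.
Qed.

Definition ext (g : U a -> R) (y : R) : R := g (inl (cl y)).

Lemma ext_val g x : a <= x <= 0 -> forall Hx : a <= x <= 0, ext g x = g (inl (exist _ x Hx)).
Proof. intros. unfold ext. f_equal. f_equal. apply Iv_eq. apply cl_val; auto. Qed.

Lemma ext_cont g x : CU a g -> continuous (ext g) x.
Proof. intros Hg. apply (cont_ext' (fun y => g (inl y))). apply Hg. Qed.

Definition om (lam : R) := sqrt (lam / kappa).
Definition bb (lam : R) := beta * lam / (lam + alpha).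
Definition u1 lam x := ch (om lam * (x - a)).
Definition u1d lam x := om lam * sh (om lam * (x - a)).
Definition u2 lam x := ch (om lam * x) - bb lam / om lam * sh (om lam * x).
Definition u2d lam x := om lam * sh (om lam * x) - bb lam * ch (om lam * x).
Definition DD lam := om lam * sh (om lam * (- a)) + bb lam * ch (om lam * (- a)).

Section Lam.
Variable lam : R.
Hypothesis Hlam : 0 < lam.

Lemma om_pos : 0 < om lam.
Proof. unfold om. apply sqrt_lt_R0. apply Rdiv_lt_0_compat; auto. Qed.

Lemma om_sq : om lam * om lam = lam / kappa.
Proof. unfold om. apply sqrt_sqrt. left; apply Rdiv_lt_0_compat; auto. Qed.

Lemma bb_nonneg : 0 <= bb lam.
Proof. unfold bb. apply Rmult_le_pos. apply Rmult_le_pos; lra. left; apply Rinv_0_lt_compat; lra. Qed.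

Lemma DD_pos : 0 < DD lam.
Proof.
  unfold DD. assert (H1 := om_pos). assert (H2 := bb_nonneg).
  assert (H3 : 0 < sh (om lam * - a)) by (apply sh_pos; nra).
  assert (H4 := ch_pos (om lam * - a)). nra.
Qed.

Lemma du1 (x : R) : is_derive (u1 lam) x (u1d lam x).
Proof.
  eapply is_derive_eq. apply (is_derive_ext' (fun t => ch (om lam * t + - (om lam * a)))).
  intros t; unfold u1; replace (om lam * t + - (om lam * a)) with (om lam * (t - a)) by ring; reflexivity.
  apply d_chl. unfold u1d. replace (om lam * x + - (om lam * a)) with (om lam * (x - a)) by ring; reflexivity.
Qed.

Lemma du1d (x : R) : is_derive (u1d lam) x (om lam * om lam * u1 lam x).
Proof.
  eapply is_derive_eq. apply (is_derive_ext' (fun t => om lam * sh (om lam * t + - (om lam * a)))).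
  intros t; unfold u1d; replace (om lam * t + - (om lam * a)) with (om lam * (t - a)) by ring; reflexivity.
  apply d_scal. apply d_shl.
  unfold u1. replace (om lam * x + - (om lam * a)) with (om lam * (x - a)) by ring. ring.
Qed.

Lemma du2 (x : R) : is_derive (u2 lam) x (u2d lam x).
Proof.
  assert (H := om_pos).
  eapply is_derive_eq. apply (is_derive_ext' (fun t => ch (om lam * t + 0) - bb lam / om lam * sh (om lam * t + 0))).
  intros; unfold u2; rewrite Rplus_0_r; auto. apply d_minus. apply d_chl. apply d_scal. apply d_shl.
  unfold u2d. rewrite Rplus_0_r. field. lra.
Qed.

Lemma du2d (x : R) : is_derive (u2d lam) x (om lam * om lam * u2 lam x).
Proof.
  assert (H := om_pos).
  eapply is_derive_eq. apply (is_derive_ext' (fun t => om lam * sh (om lam * t + 0) - bb lam * ch (om lam * t + 0))).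
  intros; unfold u2d; rewrite Rplus_0_r; auto. apply d_minus. apply d_scal. apply d_shl. apply d_scal. apply d_chl.
  unfold u2. rewrite Rplus_0_r. field. lra.
Qed.

Lemma W_lam x : u2d lam x * u1 lam x - u1d lam x * u2 lam x = - DD lam.
Proof.
  unfold u2d, u1, u1d, u2, DD. rewrite <- (W_ident (om lam) (bb lam) x a). ring.
  assert (H := om_pos). lra.
Qed.

Lemma u1_cont (x : R) : continuous (u1 lam) x.
Proof. apply (ex_derive_continuous (u1 lam) x). eexists. apply du1. Qed.
Lemma u2_cont (x : R) : continuous (u2 lam) x.
Proof. apply (ex_derive_continuous (u2 lam) x). eexists. apply du2. Qed.

Definition I1 (g : U a -> R) x := RInt (fun y => u1 lam y * ext g y) a x.
Definition I2 (g : U a -> R) x := RInt (fun y => u2 lam y * ext g y) x 0.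
Definition ee (g : U a -> R) := beta * g (zplus a) / ((lam + alpha) * DD lam).
Definition FF g x := (u2 lam x * I1 g x + u1 lam x * I2 g x) / (kappa * DD lam) + ee g * u1 lam x.
Definition F1 g x := (u2d lam x * I1 g x + u1d lam x * I2 g x) / (kappa * DD lam) + ee g * u1d lam x.
Definition F2 g x := (om lam * om lam * u2 lam x * I1 g x + om lam * om lam * u1 lam x * I2 g x +
   (u2d lam x * (u1 lam x * ext g x) + u1d lam x * (- (u2 lam x * ext g x)))) / (kappa * DD lam)
   + ee g * (om lam * om lam * u1 lam x).
Definition Rres (g : U a -> R) (u : U a) : R :=
  match u with
  | inl x => FF g (proj1_sig x)
  | inr _ => (g (zplus a) + alpha * FF g 0) / (lam + alpha)
  end.

Lemma int1_cont (g : U a -> R) (x : R) : CU a g -> continuous (fun y => u1 lam y * ext g y) x.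
Proof. intros Hg. apply (continuous_mult (u1 lam) (ext g)). apply u1_cont. apply ext_cont; auto. Qed.
Lemma int2_cont (g : U a -> R) (x : R) : CU a g -> continuous (fun y => u2 lam y * ext g y) x.
Proof. intros Hg. apply (continuous_mult (u2 lam) (ext g)). apply u2_cont. apply ext_cont; auto. Qed.

Lemma int1_ex g b c : CU a g -> ex_RInt (fun y => u1 lam y * ext g y) b c.
Proof. intros Hg. apply (@ex_RInt_continuous R_CompleteNormedModule). intros; apply int1_cont; auto. Qed.
Lemma int2_ex g b c : CU a g -> ex_RInt (fun y => u2 lam y * ext g y) b c.
Proof. intros Hg. apply (@ex_RInt_continuous R_CompleteNormedModule). intros; apply int2_cont; auto. Qed.

Lemma dI1 (g : U a -> R) (x : R) : CU a g -> is_derive (I1 g) x (u1 lam x * ext g x).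
Proof.
  intros Hg. apply (is_derive_RInt (fun y => u1 lam y * ext g y) (I1 g) a x).
  exists (mkposreal 1 Rlt_0_1). intros b _. apply (@RInt_correct R_CompleteNormedModule), int1_ex; auto.
  apply int1_cont; auto.
Qed.

Lemma dI2 (g : U a -> R) (x : R) : CU a g -> is_derive (I2 g) x (- (u2 lam x * ext g x)).
Proof.
  intros Hg. apply (is_derive_ext' (fun t => - RInt (fun y => u2 lam y * ext g y) 0 t)).
  intros t. unfold I2. rewrite <- (opp_RInt_swap (fun y => u2 lam y * ext g y) 0 t). reflexivity. apply int2_ex; auto.
  apply d_opp. apply (is_derive_RInt (fun y => u2 lam y * ext g y) _ 0 x).
  exists (mkposreal 1 Rlt_0_1). intros b _. apply (@RInt_correct R_CompleteNormedModule), int2_ex; auto.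
  apply int2_cont; auto.
Qed.

Lemma dFF (g : U a -> R) (x : R) : CU a g -> is_derive (FF g) x (F1 g x).
Proof.
  intros Hg. assert (HD := DD_pos). unfold FF.
  eapply is_derive_eq.
  apply d_plus. apply d_divc. apply d_plus. apply d_mult. apply du2. apply dI1; auto.
  apply d_mult. apply du1. apply dI2; auto. apply d_scal. apply du1.
  unfold F1. field. lra.
Qed.

Lemma dF1 (g : U a -> R) (x : R) : CU a g -> is_derive (F1 g) x (F2 g x).
Proof.
  intros Hg. assert (HD := DD_pos). unfold F1.
  eapply is_derive_eq.
  apply d_plus. apply d_divc. apply d_plus. apply d_mult. apply du2d. apply dI1; auto.
  apply d_mult. apply du1d. apply dI2; auto. apply d_scal. apply du1d.
  unfold F2. field. lra.
Qed.

Lemma F2_eq (g : U a -> R) (x : R) : kappa * F2 g x = lam * FF g x - ext g x.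
Proof.
  assert (HD := DD_pos). unfold F2, FF.
  replace (u2d lam x * (u1 lam x * ext g x) + u1d lam x * - (u2 lam x * ext g x))
    with (- DD lam * ext g x) by (rewrite <- (W_lam x); ring).
  rewrite om_sq. field. lra.
Qed.



Lemma FF_cont g x : CU a g -> continuity_pt (FF g) x.
Proof. intros. apply (is_derive_cont _ _ (F1 g x)). apply dFF; auto. Qed.

Lemma F1_cont g x : CU a g -> continuity_pt (F1 g) x.
Proof. intros. apply (is_derive_cont _ _ (F2 g x)). apply dF1; auto. Qed.

Lemma F2_cont g x : CU a g -> continuity_pt (F2 g) x.
Proof.
  intros Hg. apply cpt.
  apply (cext (fun t => (lam / kappa) * FF g t + (- / kappa) * ext g t)).
  intros t. apply (Rmult_eq_reg_l kappa). rewrite F2_eq. field. lra. lra.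
  apply cont_lin_R. apply cpt'. apply FF_cont; auto. apply ext_cont; auto.
Qed.

Lemma J_graph g : CU a g -> graphA a kappa alpha beta (fun u => lam * Rres g u) (fun u => lam * (lam * Rres g u - g u)).
Proof.
  intros Hg. assert (HD := DD_pos). assert (Hom := om_pos).
  split.
  { apply (cont_restrict (fun t => lam * FF g t)). intros x _.
    apply cpt. apply (cext (fun t => lam * FF g t + 0 * FF g t)).
    intros; ring. apply cont_lin_R; apply cpt'; apply FF_cont; auto. }
  exists (fun x => lam * F1 g (proj1_sig x)), (fun x => lam * F2 g (proj1_sig x)).
  split; [|split; [|split; [|split; [|split; [|split]]]]].
  - intros x. apply (deriv_from_R (fun t => lam * FF g t)). apply is_derive_Reals.
    apply d_scal. apply dFF; auto.
  - intros x. apply (deriv_from_R (fun t => lam * F1 g t)). apply is_derive_Reals.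
    apply d_scal. apply dF1; auto.
  - apply (cont_restrict (fun t => lam * F2 g t)). intros x _.
    apply cpt. apply (cext (fun t => lam * F2 g t + 0 * F2 g t)).
    intros; ring. apply cont_lin_R; apply cpt'; apply F2_cont; auto.
  - intros x Hx. rewrite Hx. unfold F1, I1, u1d. rewrite RInt_pt, Rminus_eq_0, !Rmult_0_r, sh_0. field. lra.
  - intros x Hx. simpl. rewrite Hx. unfold FF, F1, I2. rewrite !RInt_pt.
    unfold u2, u2d, u1, u1d. rewrite Rmult_0_r, ch_0, sh_0. replace (0 - a) with (- a) by ring.
    unfold ee, DD in *. unfold bb in *.
    assert (HS : 0 < sh (om lam * - a)) by (apply sh_pos; nra). assert (HC := ch_pos (om lam * - a)).
    set (S := sh (om lam * - a)) in *. set (C := ch (om lam * - a)) in *. set (o := om lam) in *.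
    set (I := I1 g 0). set (gp := g (zplus a)).
    field. repeat split; try lra.
    assert (0 < o * S * (lam + alpha)) by (apply Rmult_lt_0_compat; [apply Rmult_lt_0_compat|]; lra).
    assert (0 <= beta * lam * C) by (apply Rmult_le_pos; [apply Rmult_le_pos|]; lra). lra.
  - intros x Hx. simpl. rewrite Hx. set (F0 := FF g 0). set (gp := g (zplus a)). field. lra.
  - intros x. simpl. replace (kappa * (lam * F2 g (proj1_sig x))) with (lam * (kappa * F2 g (proj1_sig x))) by ring.
    rewrite F2_eq. unfold ext. rewrite cl_id. ring.
Qed.

Lemma Rres_pos g : CU a g -> (forall u, 0 <= g u) -> forall u, 0 <= Rres g u.
Proof.
  intros Hg Hp. assert (HD := DD_pos). assert (Hom := om_pos). assert (Hbb := bb_nonneg).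
  assert (HF : forall x, a <= x <= 0 -> 0 <= FF g x).
  { intros x Hx. unfold FF.
    assert (A1 : 0 <= I1 g x).
    { apply RInt_ge_0. lra. apply int1_ex; auto. intros y _. apply Rmult_le_pos.
      left; apply ch_pos. apply Hp. }
    assert (A2 : 0 <= I2 g x).
    { apply RInt_ge_0. lra. apply int2_ex; auto. intros y Hy. apply Rmult_le_pos.
      2: apply Hp. unfold u2. assert (sh (om lam * y) <= 0) by (apply sh_nonpos; nra).
      assert (0 <= bb lam / om lam) by (apply Rmult_le_pos; auto; left; apply Rinv_0_lt_compat; auto).
      assert (0 < ch (om lam * y)) by apply ch_pos. nra. }
    assert (A3 : 0 <= u2 lam x).
    { unfold u2. assert (sh (om lam * x) <= 0) by (apply sh_nonpos; nra).
      assert (0 <= bb lam / om lam) by (apply Rmult_le_pos; auto; left; apply Rinv_0_lt_compat; auto).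
      assert (0 < ch (om lam * x)) by apply ch_pos. nra. }
    assert (A4 : 0 < u1 lam x) by apply ch_pos.
    assert (A5 : 0 <= ee g).
    { unfold ee. apply Rmult_le_pos. apply Rmult_le_pos; [lra | apply Hp].
      left; apply Rinv_0_lt_compat. apply Rmult_lt_0_compat; lra. }
    apply Rplus_le_le_0_compat. apply Rmult_le_pos. nra. left; apply Rinv_0_lt_compat; nra. nra. }
  intros [x|[]]; simpl.
  - apply HF. apply (proj2_sig x).
  - apply Rmult_le_pos. assert (0 <= FF g 0) by (apply HF; lra). generalize (Hp (zplus a)); nra.
    left; apply Rinv_0_lt_compat; lra.
Qed.

Lemma Rres_lin f g c d : CU a f -> CU a g ->
  Rres (fun u => c * f u + d * g u) = (fun u => c * Rres f u + d * Rres g u).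
Proof.
  intros Hf Hg. apply functional_extensionality.
  assert (E1 : forall x, I1 (fun u => c * f u + d * g u) x = c * I1 f x + d * I1 g x).
  { intros x. unfold I1. rewrite <- RInt_lin2 by (apply int1_ex; auto). apply RInt_ext_R. intros; unfold ext; ring. }
  assert (E2 : forall x, I2 (fun u => c * f u + d * g u) x = c * I2 f x + d * I2 g x).
  { intros x. unfold I2. rewrite <- RInt_lin2 by (apply int2_ex; auto). apply RInt_ext_R. intros; unfold ext; ring. }
  assert (E3 : forall x, FF (fun u => c * f u + d * g u) x = c * FF f x + d * FF g x).
  { intros x. unfold FF. rewrite E1, E2. unfold ee. simpl. assert (HD := DD_pos). field. lra. }
  intros [x|[]]; simpl; rewrite E3; auto. field. lra.
Qed.

Lemma deriv_lin h1 h2 x l1 l2 c d : deriv_Iv a h1 x l1 -> deriv_Iv a h2 x l2 ->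
  deriv_Iv a (fun y => c * h1 y + d * h2 y) x (c * l1 + d * l2).
Proof.
  intros D1 D2 eps He.
  assert (HK : 0 < Rabs c + Rabs d + 1) by (generalize (Rabs_pos c) (Rabs_pos d); lra).
  assert (He' : 0 < eps / 2 / (Rabs c + Rabs d + 1)) by (apply Rdiv_lt_0_compat; lra).
  destruct (D1 _ He') as [d1 [Hd1 K1]]. destruct (D2 _ He') as [d2 [Hd2 K2]].
  exists (Rmin d1 d2). split. apply Rmin_pos; auto. intros y Hne Hy.
  assert (A1 := K1 y Hne (Rlt_le_trans _ _ _ Hy (Rmin_l _ _))).
  assert (A2 := K2 y Hne (Rlt_le_trans _ _ _ Hy (Rmin_r _ _))).
  assert (Hn : proj1_sig y - proj1_sig x <> 0) by lra.
  replace ((c * h1 y + d * h2 y - (c * h1 x + d * h2 x)) / (proj1_sig y - proj1_sig x) - (c * l1 + d * l2))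
    with (c * ((h1 y - h1 x) / (proj1_sig y - proj1_sig x) - l1) + d * ((h2 y - h2 x) / (proj1_sig y - proj1_sig x) - l2))
    by (field; auto).
  apply (Rle_lt_trans _ (eps / 2)); [apply lin_small; [lra | apply Rlt_le; auto | apply Rlt_le; auto] | lra].
Qed.

Lemma cont_Iv_lin h1 h2 c d : cont_Iv a h1 -> cont_Iv a h2 -> cont_Iv a (fun y => c * h1 y + d * h2 y).
Proof.
  intros C1 C2.
  exact (CU_lin a (fun u => match u with inl x => h1 x | inr _ => 0 end)
                  (fun u => match u with inl x => h2 x | inr _ => 0 end) c d C1 C2).
Qed.

Lemma cont_Iv_ext h1 h2 : (forall x, h1 x = h2 x) -> cont_Iv a h1 -> cont_Iv a h2.
Proof. intros H C. replace h2 with h1; auto. apply functional_extensionality; auto. Qed.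

Lemma G_lin f1 g1 f2 g2 c d : graphA a kappa alpha beta f1 g1 -> graphA a kappa alpha beta f2 g2 ->
  graphA a kappa alpha beta (fun u => c * f1 u + d * f2 u) (fun u => c * g1 u + d * g2 u).
Proof.
  intros [Cf1 [h1 [h2 [D1 [D2 [Ch [Ba [B0 [Bp Bi]]]]]]]]] [Cf2 [k1 [k2 [E1 [E2 [Ck [Ca [C0 [Cp Ci]]]]]]]]].
  split. apply CU_lin; auto.
  exists (fun x => c * h1 x + d * k1 x), (fun x => c * h2 x + d * k2 x).
  split; [|split; [|split; [|split; [|split; [|split]]]]].
  - intros x. apply (deriv_lin (fun y => f1 (inl y)) (fun y => f2 (inl y))); auto.
  - intros x. apply deriv_lin; auto.
  - apply cont_Iv_lin; auto.
  - intros x Hx. rewrite Ba, Ca by auto. ring.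
  - intros x Hx. rewrite B0, C0 by auto. ring.
  - intros x Hx. rewrite (Bp x Hx), (Cp x Hx). ring.
  - intros x. rewrite Bi, Ci. ring.
Qed.

Lemma G_CU f g : graphA a kappa alpha beta f g -> CU a f /\ CU a g.
Proof.
  intros [Cf [h1 [h2 [D1 [D2 [Ch [Ba [B0 [Bp Bi]]]]]]]]]. split; auto.
  unfold CU. apply (cont_Iv_ext (fun y => kappa * h2 y + 0 * h2 y)). intros; rewrite Bi; ring.
  apply cont_Iv_lin; auto.
Qed.

Lemma G_const c : graphA a kappa alpha beta (fun _ => c) (fun _ => 0).
Proof.
  split. apply CU_const. exists (fun _ => 0), (fun _ => 0).
  split; [|split; [|split; [|split; [|split; [|split]]]]].
  - intros x eps He. exists 1. split. lra. intros y Hne _. unfold Rminus. rewrite Rplus_opp_r.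
    unfold Rdiv. rewrite Rmult_0_l, Rplus_opp_r, Rabs_R0. auto.
  - intros x eps He. exists 1. split. lra. intros y Hne _. unfold Rminus. rewrite Rplus_opp_r.
    unfold Rdiv. rewrite Rmult_0_l, Rplus_opp_r, Rabs_R0. auto.
  - intros x eps He. exists 1. split. lra. intros y _. rewrite Rminus_eq_0, Rabs_R0. auto.
  - auto.
  - intros; ring.
  - intros; ring.
  - intros; ring.
Qed.

Lemma deriv_zero_loc (F : R -> R) t l lo hi : lo < t < hi -> (forall s, lo < s < hi -> F s = 0) ->
  is_derive F t l -> l = 0.
Proof.
  intros Ht HF HD. apply is_derive_Reals in HD.
  destruct (Req_dec l 0) as [|Hl]; auto. exfalso.
  assert (Hl' : 0 < Rabs l / 2) by (apply Rabs_pos_lt in Hl; lra).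
  destruct (HD _ Hl') as [d Hd].
  set (h := Rmin d (Rmin (t - lo) (hi - t)) / 2).
  assert (Hm : 0 < Rmin d (Rmin (t - lo) (hi - t))) by (repeat apply Rmin_pos; try apply (cond_pos d); lra).
  assert (Hh : 0 < h) by (unfold h; lra).
  assert (Hh1 : h < d) by (unfold h; generalize (Rmin_l d (Rmin (t - lo) (hi - t))); lra).
  assert (Hh2 : h < hi - t) by (unfold h; generalize (Rmin_r d (Rmin (t - lo) (hi - t))) (Rmin_r (t - lo) (hi - t)); lra).
  specialize (Hd h ltac:(lra)). rewrite Rabs_right in Hd by lra. specialize (Hd Hh1).
  rewrite (HF (t + h)), (HF t) in Hd by lra.
  replace ((0 - 0) / h - l) with (- l) in Hd by (field; lra). rewrite Rabs_Ropp in Hd. lra.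
Qed.

Lemma cont_zero (F : R -> R) t0 lo hi : lo < hi -> (t0 = lo \/ t0 = hi) -> continuity_pt F t0 ->
  (forall s, lo < s < hi -> F s = 0) -> F t0 = 0.
Proof.
  intros Hlh Ht0 HC HF. destruct (Req_dec (F t0) 0) as [|Hn]; auto. exfalso.
  assert (He : 0 < Rabs (F t0)) by (apply Rabs_pos_lt; auto).
  destruct (HC _ He) as [d [Hd K]].
  set (h := Rmin d (hi - lo) / 2).
  assert (Hm : 0 < Rmin d (hi - lo)) by (apply Rmin_pos; lra).
  assert (Hh1 : h < d) by (unfold h; generalize (Rmin_l d (hi - lo)); lra).
  assert (Hh2 : h < hi - lo) by (unfold h; generalize (Rmin_r d (hi - lo)); lra).
  assert (Hh : 0 < h) by (unfold h; lra).
  destruct Ht0 as [->| ->].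
  - specialize (K (lo + h)). simpl in K. unfold R_dist in K. rewrite HF in K by lra.
    replace (lo + h - lo) with h in K by ring. rewrite Rabs_right in K by lra.
    assert (Hne : lo <> lo + h) by (intro; lra).
    assert (A := K (conj (conj I Hne) Hh1)). rewrite Rminus_0_l, Rabs_Ropp in A. lra.
  - specialize (K (hi - h)). simpl in K. unfold R_dist in K. rewrite HF in K by lra.
    replace (hi - h - hi) with (- h) in K by ring. rewrite Rabs_Ropp, Rabs_right in K by lra.
    assert (Hne : hi <> hi - h) by (intro; lra).
    assert (A := K (conj (conj I Hne) Hh1)). rewrite Rminus_0_l, Rabs_Ropp in A. lra.
Qed.

Lemma uniq f g : graphA a kappa alpha beta f g -> (forall u, lam * f u - g u = 0) -> forall u, f u = 0.
Proof.
  intros HG Hz. destruct HG as [Cf [h1 [h2 [D1 [D2 [Ch [Ba [B0 [Bp Bi]]]]]]]]].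
  set (P := fun t => f (inl (cl t))). set (H1 := fun t => h1 (cl t)).
  set (k := lam / kappa). assert (Hkp : 0 < k) by (apply Rdiv_lt_0_compat; auto).
  assert (Hh2 : forall y, h2 y = k * f (inl y)).
  { intros y. assert (A := Hz (inl y)). rewrite Bi in A. unfold k. field_simplify; try lra.
    apply (Rmult_eq_reg_l kappa). field_simplify; lra. lra. }
  assert (dP : forall t, a < t < 0 -> is_derive P t (H1 t)).
  { intros t Ht. apply is_derive_Reals. apply (deriv_to_R (fun y => f (inl y))); auto. }
  assert (dH : forall t, a < t < 0 -> is_derive H1 t (k * P t)).
  { intros t Ht. apply is_derive_Reals. unfold P. rewrite <- Hh2. apply (deriv_to_R h1); auto. }
  assert (cP : forall t, continuity_pt P t) by (apply (cont_ext (fun y => f (inl y))); auto).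
  assert (cH : forall t, continuity_pt H1 t) by (apply cont_ext; apply (deriv_cont h1 h2); auto).
  set (Q := fun t => P t * H1 t).
  assert (dQ : forall t, a < t < 0 -> is_derive Q t (H1 t * H1 t + P t * (k * P t))).
  { intros t Ht. apply d_mult; auto. }
  assert (cQ : forall t, continuity_pt Q t).
  { intros t. apply cpt. apply (@continuous_mult R_UniformSpace R_AbsRing P H1 t); apply cpt'; auto. }
  assert (mono : forall s t, a <= s -> s <= t -> t <= 0 -> Q s <= Q t).
  { intros s t H1s H2 H3. destruct (Req_dec s t) as [<-|Hne]. lra.
    destruct (MVT_gen Q s t (fun t => H1 t * H1 t + P t * (k * P t))) as [c [Hc Heq]].
    - rewrite Rmin_left, Rmax_right by lra. intros x Hx. apply dQ. lra.
    - intros; apply cQ.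
    - assert (0 <= H1 c * H1 c + P c * (k * P c)) by nra. nra. }
  assert (Qa : Q a = 0).
  { unfold Q, H1. rewrite Ba. ring. apply cl_val; lra. }
  assert (Q0 : Q 0 <= 0).
  { unfold Q, H1. rewrite B0 by (apply cl_val; lra).
    assert (A1 := Bp (cl 0) ltac:(apply cl_val; lra)). assert (A2 := Hz (zplus a)).
    fold (P 0) in A1 |- *.
    assert (E : f (zplus a) = alpha * P 0 / (lam + alpha)) by (apply (Rmult_eq_reg_l (lam + alpha)); [field_simplify; lra | lra]).
    rewrite E. replace (P 0 * (beta * (alpha * P 0 / (lam + alpha) - P 0))) with
      (- (beta * lam / (lam + alpha)) * (P 0 * P 0)) by (field; lra).
    assert (0 <= beta * lam / (lam + alpha)).
    { apply Rmult_le_pos. apply Rmult_le_pos; lra. left; apply Rinv_0_lt_compat; lra. }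
    assert (0 <= P 0 * P 0) by nra. nra. }
  assert (Qz : forall t, a <= t <= 0 -> Q t = 0).
  { intros t Ht. assert (Q a <= Q t) by (apply mono; lra). assert (Q t <= Q 0) by (apply mono; lra). lra. }
  assert (Pint : forall t, a < t < 0 -> P t = 0).
  { intros t Ht. assert (E := deriv_zero_loc Q t _ a 0 Ht (fun s Hs => Qz s ltac:(lra)) (dQ t Ht)).
    assert (0 <= H1 t * H1 t) by nra. assert (0 <= P t * (k * P t)) by nra.
    assert (P t * (k * P t) = 0) by lra. assert (P t * P t = 0) by (apply (Rmult_eq_reg_l k); nra).
    nra. }
  assert (Pall : forall t, a <= t <= 0 -> P t = 0).
  { intros t Ht. destruct (Req_dec t a) as [->|Hta]. apply (cont_zero P a a 0); auto.
    destruct (Req_dec t 0) as [->|Ht0]. apply (cont_zero P 0 a 0); auto.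
    apply Pint; lra. }
  intros [x|[]].
  - assert (E : f (inl x) = P (proj1_sig x)) by (unfold P; rewrite cl_id; auto).
    rewrite E. apply Pall. apply (proj2_sig x).
  - assert (A1 := Bp (cl 0) ltac:(apply cl_val; lra)). assert (A2 := Hz (zplus a)).
    fold (P 0) in A1. rewrite (Pall 0) in A1 by lra.
    change (f (zplus a) = 0). apply (Rmult_eq_reg_l (lam + alpha)). lra. lra.
Qed.

Lemma R_inv f g : graphA a kappa alpha beta f g -> Rres (fun u => lam * f u - g u) = f.
Proof.
  intros HG. destruct (G_CU f g HG) as [Cf Cg].
  set (h := fun u => lam * f u - g u).
  assert (Ch : CU a h) by (apply CU_ext with (f := fun u => lam * f u + (-1) * g u); [intros; unfold h; ring | apply CU_lin; auto]).
  assert (HL := G_lin _ _ _ _ 1 (- lam) (J_graph h Ch) HG).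
  assert (U0 := uniq _ _ HL). apply functional_extensionality. intros u.
  assert (A : 1 * (lam * Rres h u) + - lam * f u = 0).
  { apply U0. intros v. unfold h. ring. }
  apply (Rmult_eq_reg_l lam). lra. lra.
Qed.

Lemma J_one : (fun u => lam * Rres (fun _ => 1) u) = (fun _ => 1).
Proof.
  assert (E := R_inv _ _ (G_const (/ lam))). cbv beta in E.
  replace (fun _ : U a => lam * / lam - 0) with (fun _ : U a => 1) in E
    by (apply functional_extensionality; intros; field; lra).
  apply functional_extensionality. intros u. rewrite E. field. lra.
Qed.

Lemma HG_J_conc f g : graphA a kappa alpha beta f g ->
  (fun u => lam * Rres f u) = (fun u => f u + / lam * (lam * Rres g u)).
Proof.
  intros HG. destruct (G_CU f g HG) as [Cf Cg].
  assert (E := R_inv f g HG).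
  replace (fun u => lam * f u - g u) with (fun u => lam * f u + (-1) * g u) in E
    by (apply functional_extensionality; intros; ring).
  rewrite Rres_lin in E by auto.
  apply functional_extensionality. intros u.
  apply (f_equal (fun h => h u)) in E. simpl in E. rewrite <- E. field. lra.
Qed.

End Lam.

Definition Jc (l : R) (g : U a -> R) (u : U a) : R := l * Rres l g u.

Lemma HJ_CU_c l f : 0 < l -> CU a f -> CU a (Jc l f).
Proof. intros Hl Hf. destruct (G_CU _ _ (J_graph l Hl f Hf)). auto. Qed.

Lemma HJ_lin_c l f g c d : 0 < l -> CU a f -> CU a g ->
  Jc l (fun u => c * f u + d * g u) = (fun u => c * Jc l f u + d * Jc l g u).
Proof.
  intros Hl Hf Hg. unfold Jc. rewrite Rres_lin by auto. apply functional_extensionality; intros; ring.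
Qed.

Lemma HJ_pos_c l f : 0 < l -> CU a f -> (forall u, 0 <= f u) -> forall u, 0 <= Jc l f u.
Proof. intros Hl Hf Hp u. unfold Jc. apply Rmult_le_pos. lra. apply Rres_pos; auto. Qed.

Lemma HJ_one_c l : 0 < l -> Jc l (fun _ => 1) = (fun _ => 1).
Proof. intros Hl. unfold Jc. apply J_one; auto. Qed.

Lemma HJ_G_c l f : 0 < l -> CU a f -> graphA a kappa alpha beta (Jc l f) (fun u => l * (Jc l f u - f u)).
Proof. intros Hl Hf. apply J_graph; auto. Qed.

Lemma HG_J_c l f g : 0 < l -> graphA a kappa alpha beta f g -> Jc l f = (fun u => f u + / l * Jc l g u).
Proof. intros Hl HG. unfold Jc. apply HG_J_conc; auto. Qed.

Lemma CU_bounded_c f : CU a f -> exists B, nb f B.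
Proof.
  intros Hf. assert (Hc : forall c, a <= c <= 0 -> continuity_pt (ext f) c).
  { intros c _. apply (cont_ext (fun y => f (inl y))). apply Hf. }
  destruct (continuity_ab_maj (ext f) a 0 ltac:(lra) Hc) as [Mx [HM _]].
  destruct (continuity_ab_min (ext f) a 0 ltac:(lra) Hc) as [mx [Hm _]].
  exists (Rabs (ext f Mx) + Rabs (ext f mx) + Rabs (f (zplus a))).
  intros [x|[]].
  - assert (E : f (inl x) = ext f (proj1_sig x)) by (unfold ext; rewrite cl_id; auto).
    rewrite E. assert (H1 := HM _ (proj2_sig x)). assert (H2 := Hm _ (proj2_sig x)).
    generalize (Rabs_pos (f (zplus a))). unfold Rabs. repeat destruct Rcase_abs; lra.
  - generalize (Rabs_pos (ext f Mx)) (Rabs_pos (ext f mx)). change (inr tt) with (zplus a). lra.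
Qed.

Definition Pf y := 3 * ((y - a) / (- a)) ^ 2 - 2 * ((y - a) / (- a)) ^ 3.
Definition P1f y := 6 * ((y - a) / (- a)) * (1 - (y - a) / (- a)) / (- a).
Definition P2f y := (6 - 12 * ((y - a) / (- a))) / ((- a) * (- a)).
Definition Qf y := Pf y * Pf y.
Definition Q1f y := P1f y * Pf y + Pf y * P1f y.
Definition Q2f y := (P2f y * Pf y + P1f y * P1f y) + (P1f y * P1f y + Pf y * P2f y).

Lemma dPf (x : R) : is_derive Pf x (P1f x).
Proof. unfold Pf, P1f. auto_derive. auto. field. lra. Qed.
Lemma dP1f (x : R) : is_derive P1f x (P2f x).
Proof. unfold P1f, P2f. auto_derive. auto. field. lra. Qed.
Lemma dP2f (x : R) : is_derive P2f x (- 12 / ((- a) * (- a) * (- a))).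
Proof. unfold P2f. auto_derive. auto. field. lra. Qed.
Lemma dQf (x : R) : is_derive Qf x (Q1f x).
Proof. unfold Qf, Q1f. apply d_mult; apply dPf. Qed.
Lemma dQ1f (x : R) : is_derive Q1f x (Q2f x).
Proof.
  unfold Q1f, Q2f. eapply is_derive_eq. apply d_plus.
  apply d_mult. apply dP1f. apply dPf. apply d_mult. apply dPf. apply dP1f. ring.
Qed.
Lemma cP2f (x : R) : continuity_pt P2f x.
Proof. eapply is_derive_cont. apply dP2f. Qed.
Lemma cQ2f (x : R) : continuity_pt Q2f x.
Proof.
  unfold Q2f. eapply is_derive_cont.
  apply d_plus; apply d_plus.
  apply d_mult. apply dP2f. apply dPf. apply d_mult. apply dP1f. apply dP1f.
  apply d_mult. apply dP1f. apply dP1f. apply d_mult. apply dPf. apply dP2f.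
Qed.

Definition hfun (F : R -> R) : U a -> R := fun u => match u with inl x => F (proj1_sig x) | inr _ => F 0 end.
Definition Afun (F2 : R -> R) : U a -> R := fun u => match u with inl x => kappa * F2 (proj1_sig x) | inr _ => 0 end.

Lemma G_smooth (F F1 F2 : R -> R) : (forall x, is_derive F x (F1 x)) -> (forall x, is_derive F1 x (F2 x)) ->
  (forall x, continuity_pt F2 x) -> F1 a = 0 -> F1 0 = 0 ->
  graphA a kappa alpha beta (hfun F) (Afun F2).
Proof.
  intros D1 D2 C2 Ea E0. split.
  { apply (cont_restrict F). intros x _. apply (is_derive_cont _ _ (F1 x)); auto. }
  exists (fun x => F1 (proj1_sig x)), (fun x => F2 (proj1_sig x)).
  split; [|split; [|split; [|split; [|split; [|split]]]]].
  - intros x. apply (deriv_from_R F). apply is_derive_Reals. auto.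
  - intros x. apply (deriv_from_R F1). apply is_derive_Reals. auto.
  - apply (cont_restrict F2). auto.
  - intros x Hx. simpl. rewrite Hx; auto.
  - intros x Hx. simpl. rewrite Hx, E0. ring.
  - intros x Hx. simpl. rewrite Hx. ring.
  - intros x. reflexivity.
Qed.

Lemma GP : graphA a kappa alpha beta (hfun Pf) (Afun P2f).
Proof.
  apply (G_smooth Pf P1f P2f dPf dP1f cP2f).
  unfold P1f. rewrite Rminus_eq_0. unfold Rdiv. ring.
  unfold P1f. replace ((0 - a) / - a) with 1 by (field; lra). unfold Rdiv. ring.
Qed.

Lemma GQ : graphA a kappa alpha beta (hfun Qf) (Afun Q2f).
Proof.
  apply (G_smooth Qf Q1f Q2f dQf dQ1f cQ2f).
  unfold Q1f, P1f. rewrite Rminus_eq_0. unfold Rdiv. ring.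
  unfold Q1f, P1f. replace ((0 - a) / - a) with 1 by (field; lra). unfold Rdiv. ring.
Qed.

Lemma Pf_range y : a <= y <= 0 -> 0 <= Pf y <= 1.
Proof.
  intros Hy. unfold Pf. set (t := (y - a) / - a).
  assert (Ht : t * (- a) = y - a) by (unfold t; field; lra).
  assert (0 <= t <= 1) by (split; nra).
  split.
  - assert (0 <= t ^ 2 * (3 - 2 * t)) by (apply Rmult_le_pos; [apply pow2_ge_0 | lra]).
    replace (3 * t ^ 2 - 2 * t ^ 3) with (t ^ 2 * (3 - 2 * t)) by ring. lra.
  - assert (0 <= (1 - t) ^ 2 * (1 + 2 * t)) by (apply Rmult_le_pos; [apply pow2_ge_0 | lra]).
    assert (1 - (3 * t ^ 2 - 2 * t ^ 3) = (1 - t) ^ 2 * (1 + 2 * t)) by ring. lra.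
Qed.

Lemma Pf_sep x y dl : a <= x <= 0 -> a <= y <= 0 -> 0 < dl -> dl <= Rabs (y - x) ->
  (dl / (- a)) ^ 4 <= (Pf y - Pf x) ^ 2.
Proof.
  intros Hx Hy Hd Hyx. set (d := dl / (- a)).
  assert (Hd0 : 0 <= d) by (unfold d; apply Rmult_le_pos; [lra | left; apply Rinv_0_lt_compat; lra]).
  set (tx := (x - a) / - a). set (ty := (y - a) / - a).
  assert (Ex : tx * (- a) = x - a) by (unfold tx; field; lra).
  assert (Ey : ty * (- a) = y - a) by (unfold ty; field; lra).
  assert (Ed : d * (- a) = dl) by (unfold d; field; lra).
  assert (Rx : 0 <= tx <= 1) by (split; nra). assert (Ry : 0 <= ty <= 1) by (split; nra).
  assert (EPx : Pf x = 3 * tx ^ 2 - 2 * tx ^ 3) by reflexivity.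
  assert (EPy : Pf y = 3 * ty ^ 2 - 2 * ty ^ 3) by reflexivity.
  assert (H4 : d ^ 4 = (d ^ 2) ^ 2) by ring. rewrite H4.
  destruct (Rle_lt_dec x y) as [Hle|Hlt].
  - rewrite Rabs_right in Hyx by lra.
    assert (tx + d <= ty) by nra.
    assert (A := poly_sep tx ty d ltac:(lra) ltac:(lra) Hd0 H).
    rewrite EPx, EPy. apply pow_incr. split. apply pow2_ge_0. lra.
  - rewrite Rabs_left in Hyx by lra.
    assert (ty + d <= tx) by nra.
    assert (A := poly_sep ty tx d ltac:(lra) ltac:(lra) Hd0 H).
    rewrite EPx, EPy. replace ((3 * ty ^ 2 - 2 * ty ^ 3 - (3 * tx ^ 2 - 2 * tx ^ 3)) ^ 2) with
      ((3 * tx ^ 2 - 2 * tx ^ 3 - (3 * ty ^ 2 - 2 * ty ^ 3)) ^ 2) by ring.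
    apply pow_incr. split. apply pow2_ge_0. lra.
Qed.

Lemma Jc_const l c : 0 < l -> Jc l (fun _ => c) = (fun _ => c).
Proof.
  intros Hl. replace (fun _ : U a => c) with (fun _ : U a => c * 1 + 0 * 1) by (apply functional_extensionality; intros; ring).
  rewrite HJ_lin_c, HJ_one_c by (auto; apply CU_const). apply functional_extensionality; intros; ring.
Qed.

Lemma Jc_abs l phi psi : 0 < l -> CU a phi -> CU a psi -> (forall v, Rabs (phi v) <= psi v) ->
  forall u, Rabs (Jc l phi u) <= Jc l psi u.
Proof.
  intros Hl Cp Cq H u.
  assert (A1 := HJ_pos_c l (fun v => 1 * psi v + (-1) * phi v) Hl (CU_lin a _ _ _ _ Cq Cp)).
  assert (A2 := HJ_pos_c l (fun v => 1 * psi v + 1 * phi v) Hl (CU_lin a _ _ _ _ Cq Cp)).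
  rewrite HJ_lin_c in A1, A2 by auto.
  assert (B1 : 0 <= 1 * Jc l psi u + -1 * Jc l phi u) by (apply A1; intros v; specialize (H v); rlra).
  assert (B2 : 0 <= 1 * Jc l psi u + 1 * Jc l phi u) by (apply A2; intros v; specialize (H v); rlra).
  rlra.
Qed.

Lemma Jc_contr l f B : 0 < l -> CU a f -> nb f B -> nb (Jc l f) B.
Proof.
  intros Hl Hf HB u. assert (A := Jc_abs l f (fun _ => B) Hl Hf (CU_const a B) HB u).
  rewrite Jc_const in A; auto.
Qed.

Lemma Jc_D l f g B : 0 < l -> graphA a kappa alpha beta f g -> nb g B ->
  nb (fun u => Jc l f u - f u) (B / l).
Proof.
  intros Hl HG HB u. rewrite (HG_J_c l f g Hl HG). destruct (G_CU f g HG) as [Cf Cg].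
  assert (A := Jc_contr l g B Hl Cg HB u).
  replace (f u + / l * Jc l g u - f u) with (/ l * Jc l g u) by ring.
  rewrite Rabs_mult, Rabs_inv, (Rabs_right l) by lra.
  unfold Rdiv. rewrite Rmult_comm. apply Rmult_le_compat_r. left; apply Rinv_0_lt_compat; lra. auto.
Qed.

Definition e0 : U a -> R := fun u => match u with inl _ => 0 | inr _ => 1 end.

Lemma CU_e0 : CU a e0.
Proof. apply (CU_const a 0). Qed.

Lemma Jc_e0 l (x : Iv a) : 0 < l -> 1 <= om l * (- a) -> 0 <= Jc l e0 (inl x) <= 3 * beta / om l.
Proof.
  intros Hl Hom1. assert (HD := DD_pos l Hl). assert (Hom := om_pos l Hl). assert (Hbb := bb_nonneg l Hl).
  unfold Jc. simpl. unfold FF.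
  assert (E1 : I1 l e0 (proj1_sig x) = 0).
  { unfold I1. rewrite (RInt_ext_R _ (fun _ => 0)). apply RInt_zero. intros; unfold ext; simpl; ring. }
  assert (E2 : I2 l e0 (proj1_sig x) = 0).
  { unfold I2. rewrite (RInt_ext_R _ (fun _ => 0)). apply RInt_zero. intros; unfold ext; simpl; ring. }
  rewrite E1, E2. unfold ee. simpl.
  set (x0 := proj1_sig x). assert (Hx0 : a <= x0 <= 0) by apply (proj2_sig x).
  set (U1 := u1 l x0). set (S := sh (om l * - a)). set (C := ch (om l * - a)).
  assert (HU1 : 0 < U1) by apply ch_pos.
  assert (HU1C : U1 <= C) by (apply ch_mono; nra).
  assert (HCS : C <= 3 * S) by (apply ch_le_3sh; lra).
  assert (HS : 0 < S) by (apply sh_pos; nra).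
  assert (HDS : om l * S <= DD l) by (unfold DD; fold S C; assert (0 <= bb l * C) by (apply Rmult_le_pos; auto; left; apply ch_pos); lra).
  replace (l * ((u2 l x0 * 0 + U1 * 0) / (kappa * DD l) + beta * 1 / ((l + alpha) * DD l) * U1))
    with (beta * (l / (l + alpha)) * (U1 / DD l)) by (field; lra).
  assert (A1 : 0 <= l / (l + alpha) <= 1).
  { split. apply Rmult_le_pos; [lra | left; apply Rinv_0_lt_compat; lra].
    apply (Rmult_le_reg_r (l + alpha)). lra. unfold Rdiv. rewrite Rmult_assoc, Rinv_l by lra. lra. }
  assert (A2 : 0 <= U1 / DD l <= 3 / om l).
  { split. apply Rmult_le_pos; [lra | left; apply Rinv_0_lt_compat; lra].
    apply (Rmult_le_reg_r (DD l * om l)). nra. unfold Rdiv.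
    replace (U1 * / DD l * (DD l * om l)) with (U1 * om l) by (field; lra).
    replace (3 * / om l * (DD l * om l)) with (3 * DD l) by (field; lra). nra. }
  split. apply Rmult_le_pos. apply Rmult_le_pos; lra. lra.
  replace (3 * beta / om l) with (beta * 1 * (3 / om l)) by (field; lra).
  apply Rmult_le_compat. apply Rmult_le_pos; lra. lra. apply Rmult_le_compat_l; lra. lra.
Qed.

Lemma om_big M l : 0 <= M -> 0 < l -> kappa * (M * M) <= l -> M <= om l.
Proof.
  intros HM Hl H. unfold om. rewrite <- (sqrt_Rsqr M HM). apply sqrt_le_1_alt. unfold Rsqr.
  apply (Rmult_le_reg_l kappa); [lra|]. replace (kappa * (l / kappa)) with l by (field; lra). lra.
Qed.

Lemma HJ_conv_c : forall f, CU a f -> forall eps, 0 < eps -> exists N0, (0 < N0)%nat /\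
  forall N, (N0 <= N)%nat -> nb (fun u => Jc (INR N) f u - f u) eps.
Proof.
  intros g Hg eps He.
  destruct (CU_bounded_c g Hg) as [M HM]. assert (M0 : 0 <= M) by apply (nb_nonneg a g M HM).
  assert (HU : uniform_continuity (ext g) (fun c => a <= c <= 0)).
  { apply Heine. apply compact_P3. intros x _. apply (cont_ext (fun y => g (inl y))). apply Hg. }
  assert (He4 : 0 < eps / 4) by lra.
  destruct (HU (mkposreal (eps/4) He4)) as [d0 Hd0]. simpl in Hd0.
  set (dl := Rmin d0 (- a)). assert (Hdl : 0 < dl) by (apply Rmin_pos; [apply (cond_pos d0) | lra]).
  set (eta := (dl / (- a)) ^ 4). assert (Heta : 0 < eta) by (apply pow_lt; apply Rdiv_lt_0_compat; lra).
  set (K := 2 * M / eta).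
  assert (HK : 0 <= K) by (unfold K; apply Rmult_le_pos; [lra | left; apply Rinv_0_lt_compat; lra]).
  assert (KB : forall x y, a <= x <= 0 -> a <= y <= 0 ->
            Rabs (ext g y - ext g x) <= eps / 4 + K * (Pf y - Pf x) ^ 2).
  { intros x y Hx Hy.
    assert (Bx : Rabs (ext g x) <= M) by apply HM.
    assert (By : Rabs (ext g y) <= M) by apply HM.
    assert (Hsq : 0 <= (Pf y - Pf x) ^ 2) by apply pow2_ge_0.
    assert (HKs : 0 <= K * (Pf y - Pf x) ^ 2) by (apply Rmult_le_pos; auto).
    destruct (Rlt_le_dec (Rabs (y - x)) dl) as [Hlt|Hge].
    - assert (Rabs (ext g y - ext g x) < eps / 4).
      { apply Hd0; auto. generalize (Rmin_l d0 (-a)). fold dl. lra. }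
      lra.
    - assert (S := Pf_sep x y dl Hx Hy Hdl Hge). fold eta in S.
      assert (2 * M <= K * (Pf y - Pf x) ^ 2).
      { assert (E : 2 * M = K * eta) by (unfold K; field; lra). rewrite E. apply Rmult_le_compat_l; auto. }
      rlra. }
  destruct (G_CU _ _ GP) as [CP CAP]. destruct (G_CU _ _ GQ) as [CQ CAQ].
  destruct (CU_bounded_c _ CAP) as [BP HBP]. destruct (CU_bounded_c _ CAQ) as [BQ HBQ].
  assert (BP0 : 0 <= BP) by apply (nb_nonneg a _ _ HBP).
  assert (BQ0 : 0 <= BQ) by apply (nb_nonneg a _ _ HBQ).
  set (C1 := K * (BQ + 2 * BP)). assert (HC1 : 0 <= C1) by (unfold C1; apply Rmult_le_pos; lra).
  destruct (big_N C1 (eps / 4) HC1 He4) as [N1 [HN1 HB1]].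
  assert (HC2 : 0 <= 2 * alpha * M) by (apply Rmult_le_pos; lra).
  destruct (big_N (2 * alpha * M) eps HC2 He) as [N2 [HN2 HB2]].
  set (Mom := 1 / (- a) + 24 * M * beta / eps).
  assert (HMom : 0 <= Mom).
  { unfold Mom. assert (0 < 1 / (- a)) by (apply Rdiv_lt_0_compat; lra).
    assert (0 <= 24 * M * beta / eps) by (apply Rmult_le_pos; [apply Rmult_le_pos; lra | left; apply Rinv_0_lt_compat; lra]).
    lra. }
  assert (HkM : 0 <= kappa * (Mom * Mom)) by (apply Rmult_le_pos; nra).
  set (N3 := S (fl (kappa * (Mom * Mom)))).
  exists (Nat.max N1 (Nat.max N2 N3)). split. lia.
  intros N HN. set (l := INR N).
  assert (HN3 : (N3 <= N)%nat) by lia.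
  assert (Hl3 : kappa * (Mom * Mom) <= l).
  { destruct (fl_spec _ HkM) as [_ F2]. apply le_INR in HN3. unfold N3 in HN3. rewrite S_INR in HN3. fold l in HN3. lra. }
  assert (Hl : 0 < l) by (unfold l; apply lt_0_INR; lia).
  assert (HomM : Mom <= om l) by (apply om_big; auto).
  assert (Hom := om_pos l Hl).
  assert (Hom1 : 1 <= om l * (- a)).
  { assert (1 / (- a) <= om l).
    { unfold Mom in HomM. assert (0 <= 24 * M * beta / eps) by (apply Rmult_le_pos; [apply Rmult_le_pos; lra | left; apply Rinv_0_lt_compat; lra]). lra. }
    apply (Rmult_le_compat_r (- a)) in H. 2: lra. replace (1 / - a * - a) with 1 in H by (field; lra). lra. }
  assert (Hom2 : 2 * M * (3 * beta / om l) <= eps / 4).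
  { assert (24 * M * beta / eps <= om l).
    { unfold Mom in HomM. assert (0 < 1 / (- a)) by (apply Rdiv_lt_0_compat; lra). lra. }
    replace (2 * M * (3 * beta / om l)) with (6 * M * beta / om l) by (field; lra).
    apply (Rmult_le_reg_r (om l)); auto. unfold Rdiv at 1. rewrite Rmult_assoc, Rinv_l by lra.
    apply (Rmult_le_compat_l (eps / 4)) in H. 2: lra.
    replace (eps / 4 * (24 * M * beta / eps)) with (6 * M * beta) in H by (field; lra). lra. }
  assert (HB1' := HB1 N ltac:(lia)). assert (HB2' := HB2 N ltac:(lia)). fold l in HB1', HB2'.
  intros [x0|[]].
  -
    set (x := proj1_sig x0). assert (Hx : a <= x <= 0) by apply (proj2_sig x0).
    set (c0 := g (inl x0)). set (p := Pf x).
    assert (Hp := Pf_range x Hx). fold p in Hp.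
    set (phi := fun v => 1 * g v + (- c0) * (fun _ : U a => 1) v).
    set (w := fun v => 1 * (1 * hfun Qf v + (-2 * p) * hfun Pf v) + (p * p) * (fun _ : U a => 1) v).
    set (q := fun v => (eps / 4) * (fun _ : U a => 1) v + K * w v).
    set (psi := fun v => 1 * q v + (2 * M) * e0 v).
    assert (C1c := CU_const a 1).
    assert (Cphi : CU a phi) by (apply CU_lin; auto).
    assert (Cw : CU a w) by (apply CU_lin; auto; apply CU_lin; auto).
    assert (Cq : CU a q) by (apply CU_lin; auto).
    assert (Cpsi : CU a psi) by (apply CU_lin; auto; apply CU_e0).
    assert (Hc0 : c0 = ext g x) by (unfold c0, ext, x; rewrite cl_id; auto).
    assert (Hdom : forall v, Rabs (phi v) <= psi v).
    { intros [y|[]].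
      - unfold psi, q, w, phi, hfun, e0, Qf. simpl.
        assert (Ey : g (inl y) = ext g (proj1_sig y)) by (unfold ext; rewrite cl_id; auto).
        rewrite Ey, Hc0. assert (A := KB x (proj1_sig y) Hx (proj2_sig y)). fold p in A.
        replace (1 * ext g (proj1_sig y) + - ext g x * 1) with (ext g (proj1_sig y) - ext g x) by ring.
        replace (1 * (eps / 4 * 1 + K * (1 * (1 * (Pf (proj1_sig y) * Pf (proj1_sig y)) + -2 * p * Pf (proj1_sig y)) + p * p * 1)) + 2 * M * 0)
          with (eps / 4 + K * (Pf (proj1_sig y) - p) ^ 2) by ring. auto.
      - unfold psi, q, w, phi, hfun, e0, Qf. simpl.
        assert (A1 := HM (zplus a)). assert (A2 := HM (inl x0)). fold c0 in A2.
        assert (0 <= K * (Pf 0 - p) ^ 2) by (apply Rmult_le_pos; auto; apply pow2_ge_0).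
        replace (1 * (eps / 4 * 1 + K * (1 * (1 * (Pf 0 * Pf 0) + -2 * p * Pf 0) + p * p * 1)) + 2 * M * 1)
          with (eps / 4 + K * (Pf 0 - p) ^ 2 + 2 * M) by ring.
        change (inr tt) with (zplus a). rlra. }
    assert (A := Jc_abs l phi psi Hl Cphi Cpsi Hdom (inl x0)).
    unfold phi in A. rewrite HJ_lin_c, HJ_one_c in A by auto.
    unfold psi in A. rewrite HJ_lin_c in A by (auto; apply CU_e0).
    unfold q in A. rewrite HJ_lin_c, HJ_one_c in A by auto.
    unfold w in A. rewrite HJ_lin_c, HJ_one_c in A by (auto; apply CU_lin; auto).
    rewrite HJ_lin_c in A by auto.
    assert (E0 := Jc_e0 l x0 Hl Hom1).
    set (JP := Jc l (hfun Pf) (inl x0)) in *. set (JQ := Jc l (hfun Qf) (inl x0)) in *.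
    set (JE := Jc l e0 (inl x0)) in *.
    assert (DP : Rabs (JP - p) <= BP / l) by (exact (Jc_D l _ _ BP Hl GP HBP (inl x0))).
    assert (DQ : Rabs (JQ - p * p) <= BQ / l) by (exact (Jc_D l _ _ BQ Hl GQ HBQ (inl x0))).
    assert (Hw : Rabs (1 * (1 * JQ + -2 * p * JP) + p * p * 1) <= BQ / l + 2 * (BP / l)).
    { replace (1 * (1 * JQ + -2 * p * JP) + p * p * 1) with ((JQ - p * p) + (-2 * p) * (JP - p)) by ring.
      eapply Rle_trans. apply Rabs_triang. rewrite Rabs_mult.
      assert (Rabs (-2 * p) <= 2) by (rewrite Rabs_mult; rewrite Rabs_left by lra; rewrite Rabs_right by lra; lra).
      assert (Rabs (-2 * p) * Rabs (JP - p) <= 2 * (BP / l)).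
      { apply Rmult_le_compat; try apply Rabs_pos; auto. }
      lra. }
    assert (HKw : K * (1 * (1 * JQ + -2 * p * JP) + p * p * 1) <= C1 / l).
    { unfold C1. replace (K * (BQ + 2 * BP) / l) with (K * (BQ / l + 2 * (BP / l))) by (field; lra).
      apply Rmult_le_compat_l; auto. unabs. lra. }
    assert (HME : 2 * M * JE <= 2 * M * (3 * beta / om l)) by (apply Rmult_le_compat_l; lra).
    fold l. fold c0.
    replace (Jc l g (inl x0) - c0) with (1 * Jc l g (inl x0) + - c0 * 1) by ring.
    eapply Rle_trans. apply A. lra.
  -
    change (inr tt) with (zplus a). fold l.
    assert (A1 := HM (zplus a)).
    assert (A2 := Jc_contr l g M Hl Hg HM (inl (cl 0))).
    change (Rabs (l * FF l g (proj1_sig (cl 0))) <= M) in A2. rewrite (cl_val 0) in A2 by lra.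
    unfold Jc. simpl.
    set (Y := l * FF l g 0) in *. set (gp := g (zplus a)) in *.
    replace (l * ((gp + alpha * FF l g 0) / (l + alpha)) - gp) with (alpha * (Y - gp) / (l + alpha)) by (unfold Y; field; lra).
    assert (HY : Rabs (Y - gp) <= 2 * M) by rlra.
    unfold Rdiv. rewrite !Rabs_mult, Rabs_inv, (Rabs_right alpha), (Rabs_right (l + alpha)) by lra.
    apply (Rle_trans _ (alpha * (2 * M) * / l)).
    + apply Rmult_le_compat. apply Rmult_le_pos; [lra | apply Rabs_pos].
      left; apply Rinv_0_lt_compat; lra. apply Rmult_le_compat_l; lra. apply Rinv_le_contravar; lra.
    + replace (alpha * (2 * M) * / l) with (2 * alpha * M / l) by (field; lra). auto.
Qed.

Theorem main_conc : exists T, conservative_Feller_semigroup a T /\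
  (forall f g, CU a f -> CU a g -> (gen_graph a T f g <-> graphA a kappa alpha beta f g)).
Proof.
  apply (abstract_main a Jc (graphA a kappa alpha beta)).
  - exact CU_bounded_c.
  - exact HJ_CU_c.
  - exact HJ_lin_c.
  - exact HJ_pos_c.
  - exact HJ_one_c.
  - exact G_CU.
  - exact G_lin.
  - exact HJ_G_c.
  - exact HG_J_c.
  - exact HJ_conv_c.
Qed.

End Conc.

Theorem lemma7p4 (a kappa alpha beta : R) :
  a < 0 -> 0 < kappa -> 0 <= alpha -> 0 <= beta ->
  exists T : R -> (U a -> R) -> (U a -> R),
    conservative_Feller_semigroup a T /\
    (forall f g : U a -> R, CU a f -> CU a g ->
       (gen_graph a T f g <-> graphA a kappa alpha beta f g)).
Proof.
  intros Ha Hk Hal Hbe. apply main_conc; auto.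
Qed.
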